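(* Let $L$ be a finite-dimensional simplicial complex and let $L_0$ be a subcomplex of $L$. Suppose that for every simplex $\sigma$ of $L_0$ the complex $\mathrm{link}_L(\sigma)$ is contractible. Then the inclusion map $|L|-|L_0|\hookrightarrow |L|$ is a homotopy equivalence.
   Context: Simplicial complexes are geometric: a set of pairwise disjoint open finite-dimensional simplices in a real vector space closed under taking faces; they need not be locally finite. $|L|$ is the union of the simplices of $L$, with the weak topology (coherent with the closures of simplices). $\mathrm{link}_L(\sigma)$ is the subcomplex consisting of all simplices $\tau$ of $L$ having no vertex in common with $\sigma$ such that $\tau$ and $\sigma$ are both faces of some simplex of $L$. *)

(* Defs.v *)
From Stdlib Require Import Reals List.
Open Scope R_scope.

Definition topology (X : Type) := (X -> Prop) -> Prop.

Definition continuous {X Y : Type} (TX : topology X) (TY : topology Y)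
  (f : X -> Y) : Prop :=
  forall U : Y -> Prop, TY U -> TX (fun x => U (f x)).

Definition subspace_top {X : Type} (T : topology X) (P : X -> Prop)
  : topology {x : X | P x} :=
  fun W => exists U, T U /\ forall q, W q <-> U (proj1_sig q).

Definition I01 := { t : R | 0 <= t <= 1 }.

(* Product topology on X x [0,1] (Euclidean topology on [0,1]). *)
Definition prod_I_top {X : Type} (TX : topology X) : topology (X * I01) :=
  fun W => forall x t, W (x, t) ->
    exists U, TX U /\ U x /\ exists eps, 0 < eps /\
      forall x' t', U x' -> Rabs (proj1_sig t' - proj1_sig t) < eps -> W (x', t').

Definition homotopic {X Y : Type} (TX : topology X) (TY : topology Y)
  (f g : X -> Y) : Prop :=
  exists H : X * I01 -> Y, continuous (prod_I_top TX) TY H /\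
    forall x t, (proj1_sig t = 0 -> H (x, t) = f x) /\
                (proj1_sig t = 1 -> H (x, t) = g x).

Definition homotopy_equivalence {X Y : Type} (TX : topology X) (TY : topology Y)
  (f : X -> Y) : Prop :=
  continuous TX TY f /\
  exists g : Y -> X, continuous TY TX g /\
    homotopic TX TX (fun x => g (f x)) (fun x => x) /\
    homotopic TY TY (fun y => f (g y)) (fun y => y).

Definition contractible {X : Type} (T : topology X) : Prop :=
  exists x0 : X, homotopic T T (fun x => x) (fun _ => x0).

Definition finite_set {V : Type} (s : V -> Prop) : Prop :=
  exists l : list V, forall v, s v -> In v l.

Definition subset {V : Type} (s t : V -> Prop) : Prop := forall v, s v -> t v.

Definition is_complex {V : Type} (K : (V -> Prop) -> Prop) : Prop :=
  (forall s, K s -> finite_set s /\ exists v, s v) /\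
  (forall s t, K s -> (exists v, t v) -> subset t s -> K t).

Definition is_subcomplex {V : Type} (K0 K : (V -> Prop) -> Prop) : Prop :=
  is_complex K0 /\ forall s, K0 s -> K s.

Definition finite_dim {V : Type} (K : (V -> Prop) -> Prop) : Prop :=
  exists n : nat, forall s, K s ->
    exists l : list V, (length l <= n)%nat /\ forall v, s v -> In v l.

Definition link {V : Type} (K : (V -> Prop) -> Prop) (sigma : V -> Prop)
  : (V -> Prop) -> Prop :=
  fun tau => K tau /\ (forall v, tau v -> ~ sigma v) /\
    exists rho, K rho /\ subset tau rho /\ subset sigma rho.

Definition supp {V : Type} (x : V -> R) : V -> Prop := fun v => x v <> 0.

(* Points of |K|: barycentric coordinate functions whose support is a simplex. *)
Definition in_real {V : Type} (K : (V -> Prop) -> Prop) (x : V -> R) : Prop :=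
  (forall v, 0 <= x v) /\ K (supp x) /\
  exists l : list V, NoDup l /\ (forall v, x v <> 0 -> In v l) /\
    fold_right Rplus 0 (map x l) = 1.

Definition real {V : Type} (K : (V -> Prop) -> Prop) := { x : V -> R | in_real K x }.

(* Weak topology: U is open iff its trace on every closed simplex |s|
   is open in the Euclidean topology of |s|. *)
Definition weak_top {V : Type} (K : (V -> Prop) -> Prop) : topology (real K) :=
  fun U => forall s, K s -> forall p : real K, U p -> subset (supp (proj1_sig p)) s ->
    exists eps, 0 < eps /\
      forall q : real K, subset (supp (proj1_sig q)) s ->
        (forall v, Rabs (proj1_sig p v - proj1_sig q v) < eps) -> U q.

(* |K| - |K0| : points whose carrier (open) simplex is not in K0. *)
Definition not_in_sub {V : Type} (K K0 : (V -> Prop) -> Prop) (p : real K) : Prop :=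
  ~ K0 (supp (proj1_sig p)).

(* Main.v *)
Require Import Defs.
From Stdlib Require Import Reals List.
From Stdlib Require Import Lra Lia Classical ClassicalDescription
  ClassicalEpsilon FunctionalExtensionality PropExtensionality ProofIrrelevance Permutation.
Open Scope R_scope.

Lemma Rabs_le_inv a b : Rabs a <= b -> -b <= a <= b.
Proof. unfold Rabs; destruct Rcase_abs; intros; lra. Qed.
Lemma Rabs_lt_inv a b : Rabs a < b -> -b < a < b.
Proof. unfold Rabs; destruct Rcase_abs; intros; lra. Qed.
Lemma Rabs_lt_intro a b : -b < a < b -> Rabs a < b.
Proof. unfold Rabs; destruct Rcase_abs; intros; lra. Qed.
Lemma Rabs_le_intro a b : -b <= a <= b -> Rabs a <= b.
Proof. unfold Rabs; destruct Rcase_abs; intros; lra. Qed.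

Section Sums.
Variable V : Type.

Definition sumL (f : V -> R) (l : list V) : R := fold_right Rplus 0 (map f l).

Lemma sumL_nil f : sumL f nil = 0. Proof. reflexivity. Qed.
Lemma sumL_cons f v l : sumL f (v :: l) = f v + sumL f l. Proof. reflexivity. Qed.
Lemma sumL_app f l1 l2 : sumL f (l1 ++ l2) = sumL f l1 + sumL f l2.
Proof. induction l1; simpl. rewrite sumL_nil; lra. rewrite !sumL_cons, IHl1. lra. Qed.

Lemma sumL_ext f g l : (forall v, In v l -> f v = g v) -> sumL f l = sumL g l.
Proof. induction l; intros H; [reflexivity|]. rewrite !sumL_cons. rewrite (H a (or_introl eq_refl)).
 rewrite IHl; auto. intros; apply H; right; auto. Qed.

Lemma sumL_scal c f l : sumL (fun v => c * f v) l = c * sumL f l.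
Proof. induction l; unfold sumL in *; simpl; [lra|]. rewrite IHl. lra. Qed.

Lemma sumL_plus f g l : sumL (fun v => f v + g v) l = sumL f l + sumL g l.
Proof. induction l; unfold sumL in *; simpl; [lra|]. rewrite IHl. lra. Qed.

Lemma sumL_minus f g l : sumL (fun v => f v - g v) l = sumL f l - sumL g l.
Proof. induction l; unfold sumL in *; simpl; [lra|]. rewrite IHl. lra. Qed.

Lemma sumL_nonneg f l : (forall v, In v l -> 0 <= f v) -> 0 <= sumL f l.
Proof. induction l; intros H; unfold sumL in *; simpl; [lra|].
 assert (0 <= f a) by (apply H; left; auto).
 assert (0 <= fold_right Rplus 0 (map f l)) by (apply IHl; intros; apply H; right; auto). lra. Qed.

Lemma sumL_le f g l : (forall v, In v l -> f v <= g v) -> sumL f l <= sumL g l.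
Proof. intros H. assert (0 <= sumL (fun v => g v - f v) l).
 apply sumL_nonneg. intros v Hv; specialize (H v Hv); lra.
 rewrite sumL_minus in H0. lra. Qed.

Lemma sumL_zero f l : (forall v, In v l -> f v = 0) -> sumL f l = 0.
Proof. intros H. rewrite (sumL_ext f (fun _ => 0)); auto. induction l; unfold sumL in *; simpl; auto.
 rewrite IHl. lra. intros; apply H; right; auto. Qed.

Lemma sumL_ge_elem f l v : (forall w, In w l -> 0 <= f w) -> In v l -> f v <= sumL f l.
Proof. induction l; intros H Hv; simpl in Hv; [contradiction|]. rewrite sumL_cons.
 destruct Hv as [->|Hv].
 - assert (0 <= sumL f l) by (apply sumL_nonneg; intros; apply H; right; auto). lra.
 - assert (f v <= sumL f l) by (apply IHl; auto; intros; apply H; right; auto).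
   assert (0 <= f a) by (apply H; left; auto). lra. Qed.

Lemma sumL_abs_le f g l e : (forall v, In v l -> Rabs (f v - g v) <= e) ->
  Rabs (sumL f l - sumL g l) <= INR (length l) * e.
Proof. induction l; intros H. unfold sumL; simpl. rewrite Rminus_0_r, Rabs_R0. lra.
 rewrite !sumL_cons. replace (f a + sumL f l - (g a + sumL g l)) with ((f a - g a) + (sumL f l - sumL g l)) by ring.
 eapply Rle_trans. apply Rabs_triang.
 assert (Rabs (f a - g a) <= e) by (apply H; left; auto).
 assert (Rabs (sumL f l - sumL g l) <= INR (length l) * e) by (apply IHl; intros; apply H; right; auto).
 change (length (a :: l)) with (S (length l)). rewrite S_INR. lra. Qed.

Definition vdec (a b : V) : {a = b} + {a <> b} := excluded_middle_informative (a = b).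

Lemma sumL_remove f l v : NoDup l -> In v l -> sumL f l = f v + sumL f (remove vdec v l).
Proof. induction l as [|a l IH]; intros Hnd Hv; simpl in Hv; [contradiction|].
 inversion Hnd; subst. simpl. destruct (vdec v a) as [->|Hne].
 - rewrite notin_remove by auto. reflexivity.
 - destruct Hv as [->|Hv]; [congruence|]. rewrite !sumL_cons. rewrite (IH H2 Hv). ring. Qed.

Lemma NoDup_remove' l v : NoDup l -> NoDup (remove vdec v l).
Proof. induction l; intros H; simpl; auto. inversion H; subst. destruct (vdec v a); auto.
 constructor; auto. intros Hin. apply in_remove in Hin. tauto. Qed.

Lemma sumL_support f l1 l2 : NoDup l1 -> NoDup l2 ->
  (forall v, f v <> 0 -> In v l1 /\ In v l2) -> sumL f l1 = sumL f l2.
Proof. revert f l2. induction l1 as [|a l1 IH]; intros f l2 H1 H2 Hs.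
 - symmetry. apply sumL_zero. intros v Hv. destruct (Req_dec (f v) 0); auto.
   destruct (Hs v H) as [[] _].
 - inversion H1; subst. rewrite sumL_cons. destruct (Req_dec (f a) 0) as [Ha|Ha].
   + rewrite Ha, Rplus_0_l. apply IH; auto. intros v Hv. destruct (Hs v Hv) as [[->|Hi] Hi2]; [congruence|]; auto.
   + assert (Ha2 : In a l2) by (apply (Hs a Ha)). rewrite (sumL_remove f l2 a H2 Ha2). f_equal.
     set (f' := fun v => if vdec v a then 0 else f v).
     rewrite (sumL_ext f f' l1). rewrite (sumL_ext f f' (remove vdec a l2)).
     apply IH; auto. apply NoDup_remove'; auto. intros v Hv. unfold f' in Hv.
     destruct (vdec v a) as [->|Hne]; [congruence|].
     destruct (Hs v Hv) as [[->|Hi] Hi2]; [congruence|].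
     split; auto. apply in_in_remove; auto.
     intros v Hv; unfold f'; destruct (vdec v a) as [->|]; auto. apply in_remove in Hv; tauto.
     intros v Hv; unfold f'; destruct (vdec v a) as [->|]; auto. contradiction.
Qed.

Lemma nodup_exists (l : list V) : exists l', NoDup l' /\ (forall v, In v l <-> In v l').
Proof. exists (nodup vdec l). split. apply NoDup_nodup. intros; rewrite nodup_In; tauto. Qed.

Lemma filter_exists (P : V -> Prop) (l : list V) : exists l', NoDup l' /\ (forall v, In v l' <-> In v l /\ P v).
Proof. destruct (nodup_exists l) as [l1 [Hn Hi]].
 exists (filter (fun v => if excluded_middle_informative (P v) then true else false) l1).
 split. apply NoDup_filter; auto. intros v. rewrite filter_In. rewrite <- Hi.
 destruct (excluded_middle_informative (P v)); split; intros [? ?]; try split; auto; discriminate. Qed.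

End Sums.

Lemma unif1 (a b : R) (F : R -> R -> Prop) :
  (forall e e' t, 0 < e' <= e -> F e t -> F e' t) ->
  (forall t, a <= t <= b -> exists e, 0 < e /\ forall t', a <= t' <= b -> Rabs (t' - t) < e -> F e t') ->
  exists e, 0 < e /\ forall t, a <= t <= b -> F e t.
Proof.
  intros Hmono Hloc. destruct (Rle_or_lt a b) as [Hab|Hab]; [| exists 1; split; [lra|]; intros; lra].
  set (S := fun x => a <= x <= b /\ exists e, 0 < e /\ forall t, a <= t <= x -> F e t).
  assert (HSa : S a).
  { destruct (Hloc a (conj (Rle_refl a) Hab)) as [e [He Hf]]. split; [lra|]. exists e; split; auto.
    intros t Ht. apply Hf; [lra|]. replace (t - a) with 0 by lra. rewrite Rabs_R0; auto. }
  assert (Hb : bound S) by (exists b; intros x [Hx _]; lra).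
  destruct (completeness S Hb (ex_intro _ a HSa)) as [c [Hub Hlub]].
  assert (Hac : a <= c) by (apply Hub; auto).
  assert (Hcb : c <= b) by (apply Hlub; intros x [Hx _]; lra).
  destruct (Hloc c (conj Hac Hcb)) as [ec [Hec Hfc]].
  assert (Hx : exists x, S x /\ c - ec < x).
  { apply NNPP; intro Hn. assert (c <= c - ec).
    { apply Hlub. intros x Hx. destruct (Rle_or_lt x (c - ec)); auto. exfalso; apply Hn; exists x; auto. }
    lra. }
  destruct Hx as [x [[Hx1 [ex [Hex Hfx]]] Hxc]].
  assert (Hx_le_c : x <= c) by (apply Hub; split; auto; exists ex; auto).
  set (m := Rmin b (c + ec / 2)).
  assert (HSm : S m).
  { split. unfold m; split; [apply Rmin_glb; lra | apply Rmin_l].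
    exists (Rmin ex ec). split. apply Rmin_glb_lt; auto.
    intros t Ht. destruct (Rle_or_lt t x) as [Htx|Htx].
    - apply Hmono with ex. split; [apply Rmin_glb_lt; auto | apply Rmin_l]. apply Hfx; lra.
    - apply Hmono with ec. split; [apply Rmin_glb_lt; auto | apply Rmin_r].
      assert (m <= c + ec / 2) by apply Rmin_r. assert (m <= b) by apply Rmin_l.
      apply Hfc. lra. apply Rabs_def1; lra. }
  assert (Hmc : m <= c) by (apply Hub; auto).
  assert (Hmb : m = b).
  { unfold m in *. destruct (Rle_or_lt b (c + ec/2)). rewrite Rmin_left; auto.
    rewrite Rmin_right in Hmc by lra. lra. }
  destruct HSm as [_ [e [He Hf]]]. exists e; split; auto. intros t Ht. apply Hf. lra.
Qed.

Section UnifN.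
Variable A : Type.
Definition adec (a b : A) : {a = b} + {a <> b} := excluded_middle_informative (a = b).
Definition upd (y : A -> R) (a : A) (t : R) : A -> R := fun b => if adec b a then t else y b.

Definition InBox (l : list A) (lo hi z y : A -> R) : Prop :=
  (forall a, In a l -> lo a <= y a <= hi a) /\ (forall a, ~ In a l -> y a = z a).

Lemma upd_same y a t : upd y a t a = t.
Proof. unfold upd; destruct (adec a a); congruence. Qed.
Lemma upd_other y a t b : b <> a -> upd y a t b = y b.
Proof. unfold upd; destruct (adec b a); congruence. Qed.
Lemma upd_upd y a t t' : upd (upd y a t) a t' = upd y a t'.
Proof. apply functional_extensionality; intro b; unfold upd; destruct (adec b a); auto. Qed.
Lemma upd_id y a : upd y a (y a) = y.
Proof. apply functional_extensionality; intro b; unfold upd; destruct (adec b a); subst; auto. Qed.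

Lemma unifN (l : list A) : forall (lo hi z : A -> R) (F : R -> (A -> R) -> Prop),
  (forall e e' y, 0 < e' <= e -> F e y -> F e' y) ->
  (forall y, InBox l lo hi z y -> exists e, 0 < e /\ forall y', InBox l lo hi z y' ->
      (forall a, In a l -> Rabs (y' a - y a) < e) -> F e y') ->
  exists e, 0 < e /\ forall y, InBox l lo hi z y -> F e y.
Proof.
  induction l as [|a l IH]; intros lo hi z F Hmono Hloc.
  - assert (Hz : forall y, InBox nil lo hi z y -> y = z).
    { intros y [_ H]. apply functional_extensionality; intro b; apply H; auto. }
    assert (Bz : InBox nil lo hi z z) by (split; [intros _ []|auto]).
    destruct (Hloc z Bz) as [e [He Hf]]. exists e; split; auto.
    intros y Hy. rewrite (Hz y Hy). apply Hf; auto. intros _ [].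
  - destruct (classic (In a l)) as [Hal|Hal].
    + assert (Heq : forall y, InBox (a :: l) lo hi z y <-> InBox l lo hi z y).
      { intros y; split; intros [H1 H2]; split.
        - intros b Hb; apply H1; right; auto.
        - intros b Hb; apply H2; intros [->|?]; auto.
        - intros b [->|Hb]; apply H1; auto.
        - intros b Hb; apply H2; intros ?; apply Hb; right; auto. }
      destruct (IH lo hi z F) as [e0 [He0 Hf0]]; auto.
      intros y Hy. apply Heq in Hy. destruct (Hloc y Hy) as [e [He Hf]].
      exists e; split; auto. intros y' Hy' Hc. apply Hf. apply Heq; auto.
      intros b [->|Hb]; apply Hc; auto.
      exists e0; split; auto. intros y Hy; apply Hf0, Heq; auto.
    +
      assert (Hslice : forall t, lo a <= t <= hi a -> exists e, 0 < e /\
          forall y, InBox l lo hi (upd z a t) y ->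
            forall t', lo a <= t' <= hi a -> Rabs (t' - t) < e -> F e (upd y a t')).
      { intros t Ht.
        set (Ft := fun e y => forall t', lo a <= t' <= hi a -> Rabs (t' - t) < e -> F e (upd y a t')).
        destruct (IH lo hi (upd z a t) Ft) as [e [He Hf]].
        - intros e e' y He' Hy t' Ht' Hd. apply Hmono with e; auto. apply Hy; auto. lra.
        - intros y [Hy1 Hy2].
          assert (Hya : y a = t) by (rewrite Hy2 by auto; apply upd_same).
          assert (Hyb : InBox (a :: l) lo hi z y).
          { split. intros b [<-|Hb]; [rewrite Hya; auto | apply Hy1; auto].
            intros b Hb. rewrite Hy2 by (intros ?; apply Hb; right; auto). apply upd_other.
            intros ->; apply Hb; left; auto. }
          destruct (Hloc y Hyb) as [e0 [He0 Hf0]]. exists e0; split; auto.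
          intros y' [Hy1' Hy2'] Hc t' Ht' Hd. apply Hf0.
          + split. intros b [<-|Hb]. rewrite upd_same; auto. rewrite upd_other by (intros ->; contradiction). apply Hy1'; auto.
            intros b Hb. assert (b <> a) by (intros ->; apply Hb; left; auto).
            rewrite upd_other by auto. rewrite Hy2' by (intros ?; apply Hb; right; auto). apply upd_other; auto.
          + intros b [<-|Hb]. rewrite upd_same, Hya; auto.
            rewrite upd_other by (intros ->; contradiction). apply Hc; auto.
        - exists e; split; auto. }
      set (G := fun e t' => forall y, InBox (a :: l) lo hi z y -> y a = t' -> F e y).
      destruct (unif1 (lo a) (hi a) G) as [e [He Hf]].
      * intros e e' t' He' Hg y Hy Hya. apply Hmono with e; auto.
      * intros t Ht. destruct (Hslice t Ht) as [e [He Hf]]. exists e; split; auto.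
        intros t' Ht' Hd y [Hy1 Hy2] Hya.
        assert (Hy0 : InBox l lo hi (upd z a t) (upd y a t)).
        { split. intros b Hb. rewrite upd_other by (intros ->; contradiction). apply Hy1; right; auto.
          intros b Hb. unfold upd. destruct (adec b a); auto. apply Hy2. intros [->|?]; auto. }
        specialize (Hf _ Hy0 t' Ht' Hd). rewrite upd_upd, <- Hya, upd_id in Hf. exact Hf.
      * exists e; split; auto. intros y Hy. apply (Hf (y a)). destruct Hy as [Hy1 _]; apply Hy1; left; auto.
        auto. auto.
Qed.
End UnifN.

Section Cx.
Variable V : Type.
Variable L : (V -> Prop) -> Prop.
Hypothesis HL : is_complex L.

Definition close (p q : V -> R) (e : R) := forall v, Rabs (p v - q v) < e.

Definition ropen (O : (V -> R) -> Prop) : Prop :=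
  (forall p, O p -> in_real L p) /\
  forall s, L s -> forall p, O p -> subset (supp p) s ->
    exists e, 0 < e /\ forall q, in_real L q -> subset (supp q) s -> close p q e -> O q.

Lemma close_sym p q e : close p q e -> close q p e.
Proof. intros H v. rewrite Rabs_minus_sym. apply H. Qed.
Lemma close_mono p q e e' : e <= e' -> close p q e -> close p q e'.
Proof. intros H1 H v. specialize (H v). lra. Qed.
Lemma close_refl p e : 0 < e -> close p p e.
Proof. intros H v. rewrite Rminus_diag, Rabs_R0. auto. Qed.
Lemma close_trans p q r e1 e2 : close p q e1 -> close q r e2 -> close p r (e1 + e2).
Proof. intros H1 H2 v. replace (p v - r v) with ((p v - q v) + (q v - r v)) by ring.
 eapply Rle_lt_trans. apply Rabs_triang. specialize (H1 v); specialize (H2 v); lra. Qed.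

Lemma inr_nonneg x v : in_real L x -> 0 <= x v.
Proof. intros [H _]; auto. Qed.
Lemma inr_L x : in_real L x -> L (supp x).
Proof. intros [_ [H _]]; auto. Qed.
Lemma inr_list x : in_real L x -> exists l, NoDup l /\ (forall v, x v <> 0 -> In v l) /\ sumL V x l = 1.
Proof. intros [_ [_ H]]; exact H. Qed.
Lemma inr_sum_any x l : in_real L x -> NoDup l -> (forall v, x v <> 0 -> In v l) -> sumL V x l = 1.
Proof. intros Hx Hl Hs. destruct (inr_list x Hx) as [l' [Hn [Hs' Hsum]]]. rewrite <- Hsum.
 apply sumL_support; auto. Qed.
Lemma inr_sum_le1 x l : in_real L x -> NoDup l -> sumL V x l <= 1.
Proof. intros Hx Hl. destruct (inr_list x Hx) as [l' [Hn [Hs' Hsum]]].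
 set (f := fun v => if excluded_middle_informative (In v l) then x v else 0).
 rewrite (sumL_ext V x f l). rewrite (sumL_support V f l l'); auto.
 rewrite <- Hsum. apply sumL_le. intros v _. unfold f. destruct excluded_middle_informative; [lra|].
 apply inr_nonneg; auto.
 intros v Hv. unfold f in Hv. destruct excluded_middle_informative; [|congruence]. split; auto.
 intros v Hv; unfold f; destruct excluded_middle_informative; tauto. Qed.
Lemma inr_le1 x v : in_real L x -> x v <= 1.
Proof. intros Hx. pose proof (inr_sum_le1 x (v :: nil) Hx (NoDup_cons v (@in_nil V v) (NoDup_nil V))).
 rewrite sumL_cons, sumL_nil in H. lra. Qed.
Lemma inr_supp_ne x : in_real L x -> exists v, x v <> 0.
Proof. intros Hx. destruct (inr_list x Hx) as [l [_ [Hs Hsum]]]. apply NNPP; intro Hn.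
 rewrite sumL_zero in Hsum. lra. intros v _. apply NNPP; intro; apply Hn; exists v; auto. Qed.

Lemma min_pos_list (f : V -> R) (l : list V) : exists e, 0 < e /\ forall v, In v l -> f v <> 0 -> e <= Rabs (f v).
Proof. induction l as [|a l IH]. exists 1; split; [lra|]; intros _ [].
 destruct IH as [e [He Hf]]. destruct (Req_dec (f a) 0) as [Ha|Ha].
 - exists e; split; auto. intros v [<-|Hv] Hfv; [contradiction|]. auto.
 - exists (Rmin e (Rabs (f a))). split. apply Rmin_glb_lt; auto. apply Rabs_pos_lt; auto.
   intros v [<-|Hv] Hfv. apply Rmin_r. eapply Rle_trans; [apply Rmin_l|]; auto. Qed.

Lemma supp_near p : in_real L p -> exists e, 0 < e /\ forall q, close p q e -> subset (supp p) (supp q).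
Proof. intros Hp. destruct (inr_list p Hp) as [l [_ [Hs _]]]. destruct (min_pos_list p l) as [e [He Hf]].
 exists e; split; auto. intros q Hc v Hv. unfold supp in *. specialize (Hf v (Hs v Hv) Hv). specialize (Hc v).
 intro Hq. rewrite Hq, Rminus_0_r in Hc. lra. Qed.

Lemma supp_sub_L x s : in_real L x -> L s -> subset (supp x) s -> True.
Proof. auto. Qed.

Definition SContM (Q : (V -> R) -> Prop) (f : (V -> R) -> (V -> R)) :=
  forall s, L s -> forall x, Q x -> subset (supp x) s -> forall O, ropen O -> O (f x) ->
    exists e, 0 < e /\ forall x', Q x' -> subset (supp x') s -> close x x' e -> O (f x').

Definition SCont (Q : (V -> R) -> Prop) (H : (V -> R) -> R -> (V -> R)) :=
  forall s, L s -> forall x t, Q x -> subset (supp x) s -> 0 <= t <= 1 -> forall O, ropen O -> O (H x t) ->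
    exists e, 0 < e /\ forall x' t', Q x' -> subset (supp x') s -> close x x' e -> 0 <= t' <= 1 ->
      Rabs (t' - t) < e -> O (H x' t').

Lemma ropen_real O p : ropen O -> O p -> in_real L p.
Proof. intros [H _] Hp; auto. Qed.

Lemma pre_open Q f O : ropen Q -> SContM Q f -> ropen O -> ropen (fun x => Q x /\ O (f x)).
Proof. intros HQ Hf HO. split. intros p [Hp _]. apply (ropen_real Q); auto.
 intros s Hs p [Hp Hop] Hsub. destruct HQ as [_ HQ]. destruct (HQ s Hs p Hp Hsub) as [e1 [He1 H1]].
 destruct (Hf s Hs p Hp Hsub O HO Hop) as [e2 [He2 H2]].
 exists (Rmin e1 e2). split. apply Rmin_glb_lt; auto.
 intros q Hq Hqs Hc. assert (Q q) by (apply H1; auto; eapply close_mono; [apply Rmin_l|]; eauto).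
 split; auto. apply H2; auto. eapply close_mono; [apply Rmin_r|]; eauto. Qed.

Lemma SContM_id Q : (forall x, Q x -> in_real L x) -> SContM Q (fun x => x).
Proof. intros HQ s Hs x Hx Hsub O [HO1 HO2] Ox. destruct (HO2 s Hs x Ox Hsub) as [e [He Hf]].
 exists e; split; [exact He|]. intros x' Hx' Hs' Hc. apply Hf; auto. Qed.

Lemma SCont_at Q H t0 : 0 <= t0 <= 1 -> SCont Q H -> SContM Q (fun x => H x t0).
Proof. intros Ht0 HH s Hs x Hx Hsub O HO Ox. destruct (HH s Hs x t0 Hx Hsub Ht0 O HO Ox) as [e [He Hf]].
 exists e; split; auto. intros x' Hx' Hs' Hc. apply Hf; auto. rewrite Rminus_diag, Rabs_R0; auto. Qed.

Lemma SCont_const Q f : SContM Q f -> SCont Q (fun x t => f x).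
Proof. intros Hf s Hs x t Hx Hsub Ht O HO Ox. destruct (Hf s Hs x Hx Hsub O HO Ox) as [e [He Hf']].
 exists e; split; auto. Qed.

Lemma SCont_restrict P Q H : (forall x, P x -> Q x) -> SCont Q H -> SCont P H.
Proof. intros HPQ HH s Hs x t Hx Hsub Ht O HO Ox. destruct (HH s Hs x t (HPQ x Hx) Hsub Ht O HO Ox) as [e [He Hf]].
 exists e; split; auto. Qed.

Lemma SContM_restrict P Q f : (forall x, P x -> Q x) -> SContM Q f -> SContM P f.
Proof. intros HPQ HH s Hs x Hx Hsub O HO Ox. destruct (HH s Hs x (HPQ x Hx) Hsub O HO Ox) as [e [He Hf]].
 exists e; split; auto. Qed.

Lemma SCont_reverse Q H : SCont Q H -> SCont Q (fun x t => H x (1 - t)).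
Proof. intros HH s Hs x t Hx Hsub Ht O HO Ox. destruct (HH s Hs x (1 - t) Hx Hsub ltac:(lra) O HO Ox) as [e [He Hf]].
 exists e; split; auto. intros x' t' Hx' Hs' Hc Ht' Hd. apply Hf; auto. lra.
 replace (1 - t' - (1 - t)) with (- (t' - t)) by ring. rewrite Rabs_Ropp; auto. Qed.

Lemma homot_open Q H : ropen Q -> SCont Q H -> forall x t, Q x -> 0 <= t <= 1 -> forall O, ropen O -> O (H x t) ->
  exists N, ropen N /\ N x /\ (forall y, N y -> Q y) /\ exists e, 0 < e /\
    forall y t', N y -> 0 <= t' <= 1 -> Rabs (t' - t) < e -> O (H y t').
Proof.
  intros HQ HH x t Hx Ht O HO Ox.
  assert (Hxr : in_real L x) by (apply (ropen_real Q); auto).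
  destruct (HH (supp x) (inr_L x Hxr) x t Hx (fun v h => h) Ht O HO Ox) as [e0 [He0 Hf0]].
  set (e := e0 / 2).
  set (N := fun y => Q y /\ forall t', 0 <= t' <= 1 -> Rabs (t' - t) <= e -> O (H y t')).
  exists N. split; [|split; [|split]].
  - split. intros p [Hp _]; apply (ropen_real Q); auto.
    intros s Hs p [Hp Hpt] Hsub.
    destruct HQ as [_ HQ2]. destruct (HQ2 s Hs p Hp Hsub) as [eq [Heq Hqq]].
    set (F := fun d t' => forall q, Q q -> subset (supp q) s -> close p q d -> O (H q t')).
    destruct (unif1 (Rmax 0 (t - e)) (Rmin 1 (t + e)) F) as [d [Hd Hfd]].
    + intros d d' t' Hd' Hf q Hq Hqs Hc. apply Hf; auto. eapply close_mono; [|eauto]. lra.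
    + intros t' Ht'. assert (Ht'1 : 0 <= t' <= 1).
      { split. eapply Rle_trans; [apply Rmax_l|]; apply Ht'. eapply Rle_trans; [apply Ht'|apply Rmin_l]. }
      assert (Ht'2 : Rabs (t' - t) <= e).
      { destruct Ht' as [Ha Hb]. pose proof (Rmax_r 0 (t - e)). pose proof (Rmin_r 1 (t + e)).
        apply Rabs_le; lra. }
      destruct (HH s Hs p t' Hp Hsub Ht'1 O HO (Hpt t' Ht'1 Ht'2)) as [e1 [He1 Hf1]].
      exists e1; split; auto. intros t'' Ht'' Hd q Hq Hqs Hc. apply Hf1; auto.
      split. eapply Rle_trans; [apply Rmax_l|]; apply Ht''. eapply Rle_trans; [apply Ht''|apply Rmin_l].
    + exists (Rmin eq d). split. apply Rmin_glb_lt; auto.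
      intros q Hqr Hqs Hc. assert (Q q) by (apply Hqq; auto; eapply close_mono; [apply Rmin_l|]; eauto).
      split; auto. intros t' Ht' Hd'. apply (Hfd t'); auto.
      split. apply Rmax_lub; [lra|]. apply Rabs_le_inv in Hd'; lra.
      apply Rmin_glb; [lra|]. apply Rabs_le_inv in Hd'; lra.
      eapply close_mono; [apply Rmin_r|]; eauto.
  - split; auto. intros t' Ht' Hd. apply Hf0; auto. intros v h; exact h. apply close_refl; auto. unfold e in Hd; lra.
  - intros y [Hy _]; auto.
  - exists e. split. unfold e; lra. intros y t' [_ Hy] Ht' Hd. apply Hy; auto. lra.
Qed.

Lemma SCont_compM Q R f H : ropen Q -> ropen R -> SContM Q f -> (forall x, Q x -> R (f x)) -> SCont R H ->
  SCont Q (fun x t => H (f x) t).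
Proof. intros HQ HR Hf HfR HH s Hs x t Hx Hsub Ht O HO Ox.
 destruct (homot_open R H HR HH (f x) t (HfR x Hx) Ht O HO Ox) as [N [HN [Nfx [HNR [e [He Hf2]]]]]].
 destruct (Hf s Hs x Hx Hsub N HN Nfx) as [e1 [He1 Hf1]].
 exists (Rmin e e1). split. apply Rmin_glb_lt; auto.
 intros x' t' Hx' Hs' Hc Ht' Hd. apply Hf2; auto. apply Hf1; auto. eapply close_mono; [apply Rmin_r|]; eauto.
 eapply Rlt_le_trans; [eauto|apply Rmin_l]. Qed.

Lemma SCont_Mcomp Q R K f : ropen R -> SCont Q K -> (forall x t, Q x -> 0 <= t <= 1 -> R (K x t)) -> SContM R f ->
  SCont Q (fun x t => f (K x t)).
Proof. intros HR HK HKR Hf s Hs x t Hx Hsub Ht O HO Ox.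
 assert (HO' : ropen (fun y => R y /\ O (f y))) by (apply pre_open; auto).
 destruct (HK s Hs x t Hx Hsub Ht _ HO' (conj (HKR x t Hx Ht) Ox)) as [e [He Hf2]].
 exists e; split; auto. intros x' t' Hx' Hs' Hc Ht' Hd. apply (Hf2 x' t'); auto. Qed.

Lemma SContM_comp Q R f g : ropen R -> SContM Q f -> (forall x, Q x -> R (f x)) -> SContM R g ->
  SContM Q (fun x => g (f x)).
Proof. intros HR Hf HfR Hg s Hs x Hx Hsub O HO Ox.
 assert (HO' : ropen (fun y => R y /\ O (g y))) by (apply pre_open; auto).
 destruct (Hf s Hs x Hx Hsub _ HO' (conj (HfR x Hx) Ox)) as [e [He Hf2]].
 exists e; split; auto. intros x' Hx' Hs' Hc. apply (Hf2 x'); auto. Qed.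

Definition concat (H1 H2 : (V -> R) -> R -> (V -> R)) : (V -> R) -> R -> (V -> R) :=
  fun x t => if Rle_dec t (1/2) then H1 x (2 * t) else H2 x (2 * t - 1).

Lemma SCont_concat Q H1 H2 : SCont Q H1 -> SCont Q H2 -> (forall x, Q x -> H1 x 1 = H2 x 0) ->
  SCont Q (concat H1 H2).
Proof. intros HH1 HH2 Hj s Hs x t Hx Hsub Ht O HO Ox. unfold concat in *.
 destruct (Rle_dec t (1/2)) as [Hle|Hgt].
 - destruct (Req_dec t (1/2)) as [Heq|Hneq].
   + subst t. replace (2 * (1/2)) with 1 in Ox by field.
     destruct (HH1 s Hs x 1 Hx Hsub ltac:(lra) O HO Ox) as [e1 [He1 Hf1]].
     rewrite Hj in Ox by auto.
     destruct (HH2 s Hs x 0 Hx Hsub ltac:(lra) O HO Ox) as [e2 [He2 Hf2]].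
     exists (Rmin e1 e2 / 2). split. assert (0 < Rmin e1 e2) by (apply Rmin_glb_lt; auto). lra.
     intros x' t' Hx' Hs' Hc Ht' Hd. pose proof (Rmin_l e1 e2). pose proof (Rmin_r e1 e2).
     assert (0 < Rmin e1 e2) by (apply Rmin_glb_lt; auto).
     apply Rabs_def2 in Hd.
     destruct (Rle_dec t' (1/2)).
     * apply Hf1; auto. eapply close_mono; [|eauto]; lra. lra. apply Rabs_def1; lra.
     * apply Hf2; auto. eapply close_mono; [|eauto]; lra. lra. apply Rabs_def1; lra.
   + destruct (HH1 s Hs x (2 * t) Hx Hsub ltac:(lra) O HO Ox) as [e1 [He1 Hf1]].
     exists (Rmin (e1 / 2) ((1/2 - t)/2)). split. apply Rmin_glb_lt; lra.
     intros x' t' Hx' Hs' Hc Ht' Hd. pose proof (Rmin_l (e1/2) ((1/2 - t)/2)). pose proof (Rmin_r (e1/2) ((1/2 - t)/2)).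
     apply Rabs_def2 in Hd. destruct (Rle_dec t' (1/2)); [|lra].
     apply Hf1; auto. eapply close_mono; [|eauto]; lra. lra. apply Rabs_def1; lra.
 - destruct (HH2 s Hs x (2 * t - 1) Hx Hsub ltac:(lra) O HO Ox) as [e1 [He1 Hf1]].
   exists (Rmin (e1 / 2) ((t - 1/2)/2)). split. apply Rmin_glb_lt; lra.
   intros x' t' Hx' Hs' Hc Ht' Hd. pose proof (Rmin_l (e1/2) ((t - 1/2)/2)). pose proof (Rmin_r (e1/2) ((t - 1/2)/2)).
   apply Rabs_def2 in Hd. destruct (Rle_dec t' (1/2)); [lra|].
   apply Hf1; auto. eapply close_mono; [|eauto]; lra. lra. apply Rabs_def1; lra.
Qed.

Definition E (P Q : (V -> R) -> Prop) : Prop :=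
  (forall x, P x -> Q x) /\ exists r, (forall x, Q x -> P (r x)) /\ SContM Q r /\
  (exists H, SCont Q H /\ (forall x t, Q x -> 0 <= t <= 1 -> Q (H x t)) /\
     (forall x, Q x -> H x 0 = x) /\ (forall x, Q x -> H x 1 = r x)) /\
  (exists K, SCont P K /\ (forall x t, P x -> 0 <= t <= 1 -> P (K x t)) /\
     (forall x, P x -> K x 0 = r x) /\ (forall x, P x -> K x 1 = x)).

Lemma E_refl P : ropen P -> E P P.
Proof. intros HP. split; auto. exists (fun x => x). split; auto. split.
 apply SContM_id. intros; apply (ropen_real P); auto.
 split; exists (fun x t => x); repeat split; auto; apply SCont_const; apply SContM_id; intros; apply (ropen_real P); auto. Qed.

Lemma E_trans P Q R : ropen P -> ropen Q -> ropen R -> E P Q -> E Q R -> E P R.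
Proof.
  intros HP HQ HR [HPQ [r1 [Hr1 [Hc1 [[H1 [HH1 [HH1p [HH10 HH11]]]] [K1 [HK1 [HK1p [HK10 HK11]]]]]]]]]
               [HQR [r2 [Hr2 [Hc2 [[H2 [HH2 [HH2p [HH20 HH21]]]] [K2 [HK2 [HK2p [HK20 HK21]]]]]]]]].
  split; auto. exists (fun x => r1 (r2 x)). split; auto. split.
  apply SContM_comp with Q; auto. split.
  - exists (concat H2 (fun x t => H1 (r2 x) t)). split; [|split; [|split]].
    + apply SCont_concat; auto. apply SCont_compM with Q; auto. intros x Hx. rewrite HH21, HH10; auto.
    + intros x t Hx Ht. unfold concat. destruct Rle_dec. apply HH2p; auto; lra. apply HQR, HH1p; auto. lra.
    + intros x Hx. unfold concat. destruct Rle_dec; [|lra]. rewrite Rmult_0_r; auto.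
    + intros x Hx. unfold concat. destruct Rle_dec; [lra|]. replace (2 * 1 - 1) with 1 by ring. auto.
  - exists (concat (fun x t => r1 (K2 x t)) K1). split; [|split; [|split]].
    + apply SCont_concat; [| exact HK1 |].
      apply (SCont_Mcomp P Q K2 r1 HQ); [apply SCont_restrict with Q; auto | intros x t Hx Ht; apply HK2p; auto | exact Hc1].
      intros x Hx. rewrite HK21, HK10; auto.
    + intros x t Hx Ht. unfold concat. destruct Rle_dec. apply Hr1, HK2p; auto; lra. apply HK1p; auto; lra.
    + intros x Hx. unfold concat. destruct Rle_dec; [|lra]. rewrite Rmult_0_r, HK20; auto.
    + intros x Hx. unfold concat. destruct Rle_dec; [lra|]. replace (2 * 1 - 1) with 1 by ring. auto.
Qed.

End Cx.

Section Final.
Variable V : Type.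
Variable L L0 : (V -> Prop) -> Prop.
Hypothesis HL : is_complex L.
Hypothesis HL0 : is_subcomplex L0 L.

Lemma sig_eq_raw (A : Type) (P : A -> Prop) (a b : {x | P x}) : proj1_sig a = proj1_sig b -> a = b.
Proof. destruct a as [a ha], b as [b hb]; simpl; intros ->. f_equal. apply proof_irrelevance. Qed.

Definition Ur (U : real L -> Prop) (f : V -> R) : Prop := exists h : in_real L f, U (exist _ f h).

Lemma Ur_iff U (p : real L) : Ur U (proj1_sig p) <-> U p.
Proof. split. intros [h Hu]. replace p with (exist (in_real L) (proj1_sig p) h); auto. apply sig_eq_raw; auto.
 intros Hu. exists (proj2_sig p). destruct p; auto. Qed.

Lemma weak_ropen U : weak_top L U -> ropen V L (Ur U).
Proof. intros HU. split. intros p [h _]; auto.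
 intros s Hs p [h Hp] Hsub. destruct (HU s Hs (exist _ p h) Hp Hsub) as [e [He Hf]].
 exists e; split; auto. intros q Hq Hqs Hc. exists Hq. apply (Hf (exist _ q Hq)); auto. Qed.

Lemma ropen_weak O : ropen V L O -> weak_top L (fun p => O (proj1_sig p)).
Proof. intros [_ HO] s Hs p Hp Hsub. destruct (HO s Hs (proj1_sig p) Hp Hsub) as [e [He Hf]].
 exists e; split; auto. intros q Hqs Hc. apply Hf; auto. apply (proj2_sig q). Qed.

Lemma weak_top_ext (A B : real L -> Prop) : (forall p, A p <-> B p) -> weak_top L A -> weak_top L B.
Proof. intros Hab HA s Hs p Hp Hsub. apply Hab in Hp. destruct (HA s Hs p Hp Hsub) as [e [He Hf]].
 exists e; split; auto. intros q Hqs Hc. apply Hab; auto. Qed.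

Lemma ropen_real_all : ropen V L (in_real L).
Proof. split; auto. intros s Hs p Hp Hsub. exists 1; split; [lra|]. auto. Qed.

Definition Pfin (x : V -> R) := in_real L x /\ ~ L0 (supp x).

Lemma L0_face s t : L0 s -> (exists v, t v) -> subset t s -> L0 t.
Proof. destruct HL0 as [[_ H] _]. apply H. Qed.

Lemma ropen_Pfin : ropen V L Pfin.
Proof. split. intros p [h _]; auto.
 intros s Hs p [Hp Hn] Hsub. destruct (supp_near V L p Hp) as [e [He Hf]].
 exists e; split; auto. intros q Hq Hqs Hc. split; auto. intros H0. apply Hn.
 apply L0_face with (supp q); auto. apply inr_supp_ne with L; auto. Qed.

Theorem final_step : E V L Pfin (in_real L) ->
  homotopy_equivalence (subspace_top (weak_top L) (not_in_sub L L0)) (weak_top L) (fun p => proj1_sig p).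
Proof.
  intros [_ [r [Hr [Hrc [[H [HH [HHp [HH0 HH1]]]] [K [HK [HKp [HK0 HK1]]]]]]]]].
  assert (HQ := ropen_real_all). assert (HP := ropen_Pfin).
  split.
  { intros U HU. exists U; split; auto. tauto. }
  set (g := fun y : real L => exist (not_in_sub L L0)
     (exist (in_real L) (r (proj1_sig y)) (proj1 (Hr _ (proj2_sig y)))) (proj2 (Hr _ (proj2_sig y)))).
  exists g. split; [|split].
  - intros W [U [HU HW]].
    apply weak_top_ext with (fun y => (fun x => in_real L x /\ Ur U (r x)) (proj1_sig y)).
    + intros y. simpl. rewrite HW. unfold g; simpl.
      split. intros [_ Hu]. apply (Ur_iff U (exist _ (r (proj1_sig y)) (proj1 (Hr _ (proj2_sig y))))) in Hu; auto.
      intros Hu. split. apply (proj2_sig y). apply (Ur_iff U (exist _ (r (proj1_sig y)) (proj1 (Hr _ (proj2_sig y))))); auto.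
    + apply (ropen_weak (fun x => in_real L x /\ Ur U (r x))). apply pre_open; auto. apply weak_ropen; auto.
  -
    assert (Kin : forall (x : {p : real L | not_in_sub L L0 p}) (t : I01), Pfin (K (proj1_sig (proj1_sig x)) (proj1_sig t))).
    { intros [[x hx] hn] [t ht]. simpl. apply HKp; auto. split; auto. }
    exists (fun xt => exist (not_in_sub L L0) (exist (in_real L) (K (proj1_sig (proj1_sig (fst xt))) (proj1_sig (snd xt)))
                 (proj1 (Kin (fst xt) (snd xt)))) (proj2 (Kin (fst xt) (snd xt)))).
    split.
    + intros W [U [HU HW]] x t HWx. simpl in HWx. apply HW in HWx. simpl in HWx.
      apply Ur_iff in HWx. simpl in HWx.
      destruct x as [[x hx] hn]. destruct t as [t ht]. simpl in *.
      destruct (homot_open V L Pfin K HP HK x t (conj hx hn) ht (Ur U) (weak_ropen U HU) HWx)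
        as [N [HN [Nx [HNP [e [He Hf]]]]]].
      exists (fun x' => N (proj1_sig (proj1_sig x'))). split; [|split].
      * exists (fun p => N (proj1_sig p)). split. apply ropen_weak; auto. tauto.
      * simpl; auto.
      * exists e; split; auto. intros x' t' Nx' Hd. apply HW. simpl. apply Ur_iff. simpl. apply Hf; auto.
        destruct t'; simpl; auto.
    + intros [[x hx] hn] [t ht]. simpl. split; intros Ht; apply sig_eq_raw; apply sig_eq_raw; simpl; subst t.
      * apply HK0. split; auto.
      * apply HK1. split; auto.
  -
    assert (Hin : forall (y : real L) (t : I01), in_real L (H (proj1_sig y) (1 - proj1_sig t))).
    { intros [y hy] [t ht]. simpl. apply HHp; auto. lra. }
    exists (fun yt => exist (in_real L) (H (proj1_sig (fst yt)) (1 - proj1_sig (snd yt))) (Hin (fst yt) (snd yt))).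
    split.
    + intros U HU y t HUy. simpl in HUy. apply (Ur_iff U) in HUy. simpl in HUy.
      destruct y as [y hy]. destruct t as [t ht]. simpl in *.
      destruct (homot_open V L (in_real L) (fun x t => H x (1 - t)) HQ (SCont_reverse V L _ _ HH) y t hy ht (Ur U) (weak_ropen U HU) HUy)
        as [N [HN [Ny [HNP [e [He Hf]]]]]].
      exists (fun p => N (proj1_sig p)). split; [|split].
      * apply ropen_weak; auto.
      * simpl; auto.
      * exists e; split; auto. intros y' t' Ny' Hd. apply (Ur_iff U). simpl. apply Hf; auto. destruct t'; simpl; auto.
    + intros [y hy] [t ht]. simpl. split; intros Ht; apply sig_eq_raw; simpl; subst t.
      * rewrite Rminus_0_r. apply HH1; auto.
      * rewrite Rminus_diag. apply HH0; auto.
Qed.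

End Final.

Section Assembly.
Variable V : Type.
Variable L L0 : (V -> Prop) -> Prop.
Hypothesis HL : is_complex L.
Hypothesis HL0 : is_subcomplex L0 L.

Definition card_le (s : V -> Prop) (m : nat) : Prop := exists l : list V, (length l <= m)%nat /\ forall v, s v -> In v l.

Definition W (m : nat) (x : V -> R) : Prop := in_real L x /\ (~ L0 (supp x) \/ ~ card_le (supp x) m).

Lemma ropen_W m : ropen V L (W m).
Proof. split. intros p [h _]; auto.
 intros s Hs p [Hp Hn] Hsub. destruct (supp_near V L p Hp) as [e [He Hf]].
 exists e; split; auto. intros q Hq Hqs Hc. split; auto.
 apply NNPP; intros Hnn. apply not_or_and in Hnn. destruct Hnn as [H1 H2]. apply NNPP in H1. apply NNPP in H2.
 destruct Hn as [Hn|Hn]; apply Hn.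
 - apply L0_face with L (supp q); auto. apply inr_supp_ne with L; auto.
 - destruct H2 as [l [Hl Hin]]. exists l; split; auto. intros v Hv; apply Hin, Hf; auto. Qed.

Lemma W0_eq : W 0 = in_real L.
Proof. apply functional_extensionality; intro x. apply propositional_extensionality. split.
 intros [h _]; auto. intros h. split; auto. right. intros [l [Hl Hin]].
 destruct (inr_supp_ne V L x h) as [v Hv]. specialize (Hin v Hv). destruct l; simpl in *; [auto|lia]. Qed.

Lemma Wn_eq n : (forall s, L s -> exists l : list V, (length l <= n)%nat /\ forall v, s v -> In v l) -> W n = Pfin V L L0.
Proof. intros Hn. apply functional_extensionality; intro x. apply propositional_extensionality. split.
 - intros [h [H|H]]; split; auto. exfalso; apply H. apply Hn. apply (inr_L V L x h).
 - intros [h H]; split; auto. Qed.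

Lemma E_chain (step : forall k, E V L (W (S k)) (W k)) : forall k, E V L (W k) (W 0).
Proof. induction k. apply E_refl, ropen_W. apply E_trans with (W k); auto; apply ropen_W. Qed.

Lemma assemble (step : forall k, E V L (W (S k)) (W k)) (Hfd : finite_dim L) :
  homotopy_equivalence (subspace_top (weak_top L) (not_in_sub L L0)) (weak_top L) (fun p => proj1_sig p).
Proof. destruct Hfd as [n Hn]. apply final_step; auto. rewrite <- (Wn_eq n Hn), <- W0_eq. apply E_chain; auto. Qed.

End Assembly.

Section RCont.
Variable V : Type.
Definition RC (D : (V -> R) -> Prop) (x0 : V -> R) (u0 : R) (f : (V -> R) -> R -> R) :=
  forall eps, 0 < eps -> exists e, 0 < e /\ forall q u, D q -> close V x0 q e -> Rabs (u - u0) < e ->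
    Rabs (f q u - f x0 u0) < eps.

Variable D : (V -> R) -> Prop.
Variable x0 : V -> R.
Variable u0 : R.

Lemma RC_const c : RC D x0 u0 (fun _ _ => c).
Proof. intros eps Heps. exists 1; split; [lra|]. intros. rewrite Rminus_diag, Rabs_R0; auto. Qed.
Lemma RC_coord v : RC D x0 u0 (fun q _ => q v).
Proof. intros eps Heps. exists eps; split; auto. intros q u _ Hc _. specialize (Hc v). rewrite Rabs_minus_sym; auto. Qed.
Lemma RC_u : RC D x0 u0 (fun _ u => u).
Proof. intros eps Heps. exists eps; split; auto. Qed.

Lemma RC_plus f g : RC D x0 u0 f -> RC D x0 u0 g -> RC D x0 u0 (fun q u => f q u + g q u).
Proof. intros Hf Hg eps Heps. destruct (Hf (eps/2) ltac:(lra)) as [e1 [He1 H1]]. destruct (Hg (eps/2) ltac:(lra)) as [e2 [He2 H2]].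
 exists (Rmin e1 e2). split. apply Rmin_glb_lt; auto. intros q u Hq Hc Hu.
 assert (A1 := H1 q u Hq (close_mono V _ _ _ _ (Rmin_l _ _) Hc) (Rlt_le_trans _ _ _ Hu (Rmin_l _ _))).
 assert (A2 := H2 q u Hq (close_mono V _ _ _ _ (Rmin_r _ _) Hc) (Rlt_le_trans _ _ _ Hu (Rmin_r _ _))).
 replace (f q u + g q u - (f x0 u0 + g x0 u0)) with ((f q u - f x0 u0) + (g q u - g x0 u0)) by ring.
 eapply Rle_lt_trans. apply Rabs_triang. lra. Qed.

Lemma RC_opp f : RC D x0 u0 f -> RC D x0 u0 (fun q u => - f q u).
Proof. intros Hf eps Heps. destruct (Hf eps Heps) as [e [He H]]. exists e; split; auto. intros q u Hq Hc Hu.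
 replace (- f q u - - f x0 u0) with (- (f q u - f x0 u0)) by ring. rewrite Rabs_Ropp; auto. Qed.

Lemma RC_minus f g : RC D x0 u0 f -> RC D x0 u0 g -> RC D x0 u0 (fun q u => f q u - g q u).
Proof. intros Hf Hg. apply RC_plus; auto. apply RC_opp; auto. Qed.

Lemma RC_mult f g : RC D x0 u0 f -> RC D x0 u0 g -> RC D x0 u0 (fun q u => f q u * g q u).
Proof. intros Hf Hg eps Heps.
 set (A := Rabs (f x0 u0)). set (B := Rabs (g x0 u0)).
 assert (HA : 0 <= A) by apply Rabs_pos. assert (HB : 0 <= B) by apply Rabs_pos.
 set (d := Rmin 1 (eps / 2 / (A + B + 1))).
 assert (Hd : 0 < d). { apply Rmin_glb_lt; [lra|]. apply Rdiv_lt_0_compat; lra. }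
 destruct (Hf d Hd) as [e1 [He1 H1]]. destruct (Hg d Hd) as [e2 [He2 H2]].
 exists (Rmin e1 e2). split. apply Rmin_glb_lt; auto. intros q u Hq Hc Hu.
 assert (A1 := H1 q u Hq (close_mono V _ _ _ _ (Rmin_l _ _) Hc) (Rlt_le_trans _ _ _ Hu (Rmin_l _ _))).
 assert (A2 := H2 q u Hq (close_mono V _ _ _ _ (Rmin_r _ _) Hc) (Rlt_le_trans _ _ _ Hu (Rmin_r _ _))).
 replace (f q u * g q u - f x0 u0 * g x0 u0) with ((f q u - f x0 u0) * (g q u - g x0 u0) + (f q u - f x0 u0) * g x0 u0 + f x0 u0 * (g q u - g x0 u0)) by ring.
 assert (Hd1 : d <= 1) by apply Rmin_l.
 assert (Hd2 : d * (A + B + 1) <= eps / 2).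
 { unfold d. eapply Rle_trans. apply Rmult_le_compat_r; [lra|apply Rmin_r]. right; field; lra. }
 eapply Rle_lt_trans. apply Rabs_triang. eapply Rle_lt_trans. apply Rplus_le_compat_r. apply Rabs_triang.
 rewrite !Rabs_mult. fold A B.
 assert (Rabs (f q u - f x0 u0) * Rabs (g q u - g x0 u0) <= d * d).
 { apply Rmult_le_compat; try apply Rabs_pos; lra. }
 assert (Rabs (f q u - f x0 u0) * B <= d * B) by (apply Rmult_le_compat_r; lra).
 assert (A * Rabs (g q u - g x0 u0) <= A * d) by (apply Rmult_le_compat_l; lra).
 assert (d * d <= d * 1) by (apply Rmult_le_compat_l; lra).
 assert (d * d + d * B + A * d < eps) by nra. lra. Qed.

Lemma RC_inv f : RC D x0 u0 f -> f x0 u0 <> 0 -> RC D x0 u0 (fun q u => / f q u).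
Proof. intros Hf Hne eps Heps. set (A := Rabs (f x0 u0)). assert (HA : 0 < A) by (apply Rabs_pos_lt; auto).
 set (d := Rmin (A / 2) (eps * A * A / 2)).
 assert (HeA : 0 < eps * A * A) by (repeat apply Rmult_lt_0_compat; lra).
 assert (Hd : 0 < d). { apply Rmin_glb_lt; lra. }
 destruct (Hf d Hd) as [e [He H]]. exists e; split; auto. intros q u Hq Hc Hu. specialize (H q u Hq Hc Hu).
 assert (Hd1 : d <= A / 2) by apply Rmin_l. assert (Hd2 : d <= eps * A * A / 2) by apply Rmin_r.
 assert (HB : A / 2 <= Rabs (f q u)).
 { pose proof (Rabs_triang_inv (f x0 u0) (f x0 u0 - f q u)). replace (f x0 u0 - (f x0 u0 - f q u)) with (f q u) in H0 by ring.
   rewrite Rabs_minus_sym in H0. fold A in H0. lra. }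
 assert (Hfq : f q u <> 0). { intros Hz. rewrite Hz, Rabs_R0 in HB. lra. }
 replace (/ f q u - / f x0 u0) with ((f x0 u0 - f q u) / (f q u * f x0 u0)) by (field; auto).
 unfold Rdiv. rewrite Rabs_mult, Rabs_inv, Rabs_mult. fold A. rewrite Rabs_minus_sym.
 apply Rmult_lt_reg_r with (Rabs (f q u) * A). apply Rmult_lt_0_compat; lra.
 rewrite Rmult_assoc, Rinv_l by (apply Rmult_integral_contrapositive; split; lra). rewrite Rmult_1_r.
 assert (eps * (A / 2 * A) <= eps * (Rabs (f q u) * A)). { apply Rmult_le_compat_l; [lra|]. apply Rmult_le_compat_r; lra. }
 nra. Qed.

Lemma RC_div f g : RC D x0 u0 f -> RC D x0 u0 g -> g x0 u0 <> 0 -> RC D x0 u0 (fun q u => f q u / g q u).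
Proof. intros Hf Hg Hne. unfold Rdiv. apply RC_mult; auto. apply RC_inv; auto. Qed.

Lemma Rmin_lip a b c d : Rabs (Rmin a b - Rmin c d) <= Rmax (Rabs (a - c)) (Rabs (b - d)).
Proof. unfold Rmin, Rmax. repeat destruct Rle_dec; apply Rabs_le_intro;
 try (pose proof (Rabs_le_inv _ _ (Rle_refl (Rabs (a - c))))); try (pose proof (Rabs_le_inv _ _ (Rle_refl (Rabs (b - d))))); lra. Qed.
Lemma Rmax_lip a b c d : Rabs (Rmax a b - Rmax c d) <= Rmax (Rabs (a - c)) (Rabs (b - d)).
Proof. unfold Rmax at 1 2. repeat destruct Rle_dec; apply Rabs_le_intro;
 pose proof (Rabs_le_inv _ _ (Rle_refl (Rabs (a - c)))); pose proof (Rabs_le_inv _ _ (Rle_refl (Rabs (b - d))));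
 pose proof (Rmax_l (Rabs (a - c)) (Rabs (b - d))); pose proof (Rmax_r (Rabs (a - c)) (Rabs (b - d))); lra. Qed.

Lemma RC_min f g : RC D x0 u0 f -> RC D x0 u0 g -> RC D x0 u0 (fun q u => Rmin (f q u) (g q u)).
Proof. intros Hf Hg eps Heps. destruct (Hf eps Heps) as [e1 [He1 H1]]. destruct (Hg eps Heps) as [e2 [He2 H2]].
 exists (Rmin e1 e2). split. apply Rmin_glb_lt; auto. intros q u Hq Hc Hu.
 assert (A1 := H1 q u Hq (close_mono V _ _ _ _ (Rmin_l _ _) Hc) (Rlt_le_trans _ _ _ Hu (Rmin_l _ _))).
 assert (A2 := H2 q u Hq (close_mono V _ _ _ _ (Rmin_r _ _) Hc) (Rlt_le_trans _ _ _ Hu (Rmin_r _ _))).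
 eapply Rle_lt_trans. apply Rmin_lip. unfold Rmax; destruct Rle_dec; auto. Qed.
Lemma RC_max f g : RC D x0 u0 f -> RC D x0 u0 g -> RC D x0 u0 (fun q u => Rmax (f q u) (g q u)).
Proof. intros Hf Hg eps Heps. destruct (Hf eps Heps) as [e1 [He1 H1]]. destruct (Hg eps Heps) as [e2 [He2 H2]].
 exists (Rmin e1 e2). split. apply Rmin_glb_lt; auto. intros q u Hq Hc Hu.
 assert (A1 := H1 q u Hq (close_mono V _ _ _ _ (Rmin_l _ _) Hc) (Rlt_le_trans _ _ _ Hu (Rmin_l _ _))).
 assert (A2 := H2 q u Hq (close_mono V _ _ _ _ (Rmin_r _ _) Hc) (Rlt_le_trans _ _ _ Hu (Rmin_r _ _))).
 eapply Rle_lt_trans. apply Rmax_lip. unfold Rmax at 1; destruct Rle_dec; auto. Qed.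

Lemma RC_sumL (F : V -> (V -> R) -> R -> R) l : (forall v, In v l -> RC D x0 u0 (F v)) ->
  RC D x0 u0 (fun q u => sumL V (fun v => F v q u) l).
Proof. induction l as [|a l IH]; intros H. exact (RC_const 0).
 change (RC D x0 u0 (fun q u => F a q u + sumL V (fun v => F v q u) l)). apply RC_plus. apply H; left; auto.
 apply IH; intros; apply H; right; auto. Qed.

Definition minL (f : V -> R) (l : list V) : R :=
  match l with nil => 0 | v :: l' => fold_right (fun w acc => Rmin (f w) acc) (f v) l' end.

Lemma RC_minL (F : V -> (V -> R) -> R -> R) l : (forall v, In v l -> RC D x0 u0 (F v)) ->
  RC D x0 u0 (fun q u => minL (fun v => F v q u) l).
Proof. destruct l as [|a l]; intros H. exact (RC_const 0). simpl.
 induction l as [|b l IH]; simpl. apply H; left; auto.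
 apply RC_min. apply H; right; left; auto. apply IH. intros v [<-|Hv]. apply H; left; auto. apply H; right; right; auto. Qed.

Lemma RC_ext f g : D x0 -> (exists e0, 0 < e0 /\ forall q u, D q -> close V x0 q e0 -> Rabs (u - u0) < e0 -> f q u = g q u) ->
  RC D x0 u0 g -> RC D x0 u0 f.
Proof. intros Hx0 [e0 [He0 Heq]] Hg eps Heps. destruct (Hg eps Heps) as [e [He H]].
 exists (Rmin e e0). split. apply Rmin_glb_lt; auto. intros q u Hq Hc Hu.
 rewrite (Heq q u Hq), (Heq x0 u0 Hx0). apply H; auto. eapply close_mono; [apply Rmin_l|]; eauto.
 eapply Rlt_le_trans; [eauto|apply Rmin_l]. apply close_refl; auto. rewrite Rminus_diag, Rabs_R0; auto.
 eapply close_mono; [apply Rmin_r|]; eauto. eapply Rlt_le_trans; [eauto|apply Rmin_r]. Qed.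

Lemma RC_near f c : RC D x0 u0 f -> c < f x0 u0 -> exists e, 0 < e /\ forall q u, D q -> close V x0 q e -> Rabs (u - u0) < e -> c < f q u.
Proof. intros Hf Hc. destruct (Hf (f x0 u0 - c) ltac:(lra)) as [e [He H]]. exists e; split; auto.
 intros q u Hq Hcl Hu. specialize (H q u Hq Hcl Hu). apply Rabs_lt_inv in H. lra. Qed.
Lemma RC_near' f c : RC D x0 u0 f -> f x0 u0 < c -> exists e, 0 < e /\ forall q u, D q -> close V x0 q e -> Rabs (u - u0) < e -> f q u < c.
Proof. intros Hf Hc. destruct (Hf (c - f x0 u0) ltac:(lra)) as [e [He H]]. exists e; split; auto.
 intros q u Hq Hcl Hu. specialize (H q u Hq Hcl Hu). apply Rabs_lt_inv in H. lra. Qed.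

Lemma RC_list (F : V -> (V -> R) -> R -> R) l : (forall v, In v l -> RC D x0 u0 (F v)) ->
  forall eps, 0 < eps -> exists e, 0 < e /\ forall q u, D q -> close V x0 q e -> Rabs (u - u0) < e ->
    forall v, In v l -> Rabs (F v q u - F v x0 u0) < eps.
Proof. induction l as [|a l IH]; intros H eps Heps. exists 1; split; [lra|]. intros ? ? ? ? ? v [].
 destruct (IH (fun v Hv => H v (or_intror Hv)) eps Heps) as [e1 [He1 H1]].
 destruct (H a (or_introl eq_refl) eps Heps) as [e2 [He2 H2]].
 exists (Rmin e1 e2). split. apply Rmin_glb_lt; auto. intros q u Hq Hc Hu v [<-|Hv].
 apply H2; auto. eapply close_mono; [apply Rmin_r|]; eauto. eapply Rlt_le_trans; [eauto|apply Rmin_r].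
 apply H1; auto. eapply close_mono; [apply Rmin_l|]; eauto. eapply Rlt_le_trans; [eauto|apply Rmin_l]. Qed.

End RCont.

Section MinL.
Variable V : Type.
Lemma minL_le (f : V -> R) l v : In v l -> minL V f l <= f v.
Proof. destruct l as [|a l]; [intros []|]. simpl. revert v. induction l as [|b l IH]; intros v Hv; simpl in *.
 destruct Hv as [<-|[]]; lra.
 destruct Hv as [<-|[<-|Hv]]. eapply Rle_trans; [apply Rmin_r|]. apply IH; auto.
 apply Rmin_l. eapply Rle_trans; [apply Rmin_r|]. apply IH; auto. Qed.
Lemma minL_in (f : V -> R) l : l <> nil -> exists v, In v l /\ minL V f l = f v.
Proof. destruct l as [|a l]; [congruence|]. intros _. simpl. induction l as [|b l IH]; simpl.
 exists a; auto. destruct IH as [v [Hv Heq]]. unfold Rmin at 1. destruct Rle_dec.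
 exists b; auto. exists v. split; [destruct Hv as [<-|Hv]; auto|]. auto. Qed.
Lemma minL_ge (f : V -> R) l c : l <> nil -> (forall v, In v l -> c <= f v) -> c <= minL V f l.
Proof. intros Hl H. destruct (minL_in f l Hl) as [v [Hv ->]]. auto. Qed.
Lemma minL_same (f : V -> R) l1 l2 : (forall v, In v l1 <-> In v l2) -> minL V f l1 = minL V f l2.
Proof. intros H. destruct l1 as [|a l1]. destruct l2 as [|b l2]; auto. exfalso; apply (proj2 (H b)); left; auto.
 assert (Hl2 : l2 <> nil). { intros ->. apply (proj1 (H a)); left; auto. }
 apply Rle_antisym.
 - apply minL_ge; auto. intros v Hv. apply minL_le. apply H; auto.
 - apply minL_ge; [congruence|]. intros v Hv. apply minL_le. apply H; auto. Qed.
End MinL.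

Definition clamp (t : R) : R := Rmax 0 (Rmin 1 t).
Lemma clamp_in t : 0 <= clamp t <= 1.
Proof. unfold clamp, Rmax, Rmin. repeat destruct Rle_dec; lra. Qed.
Lemma clamp_id t : 0 <= t <= 1 -> clamp t = t.
Proof. unfold clamp, Rmax, Rmin. repeat destruct Rle_dec; lra. Qed.
Definition clampI (t : R) : I01 := exist _ (clamp t) (clamp_in t).

Section Contr.
Variable V : Type.
Variable K : (V -> Prop) -> Prop.

Definition CC (c : (V -> R) -> R -> (V -> R)) : Prop :=
  forall y t, in_real K y -> 0 <= t <= 1 -> forall O, ropen V K O -> O (c y t) ->
    exists N, ropen V K N /\ N y /\ exists d, 0 < d /\
      forall y' t', N y' -> 0 <= t' <= 1 -> Rabs (t' - t) < d -> O (c y' t').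

Definition CProps (c : (V -> R) -> R -> (V -> R)) (y0 : V -> R) : Prop :=
  in_real K y0 /\ (forall y t, in_real K y -> in_real K (c y t)) /\
  (forall y, in_real K y -> c y 0 = y) /\ (forall y, in_real K y -> c y 1 = y0) /\ CC c.

Lemma contr_raw : contractible (weak_top K) -> exists c y0, CProps c y0.
Proof.
  intros [x0 [H [Hc Hends]]].
  set (c := fun y t => match excluded_middle_informative (in_real K y) with
                       | left h => proj1_sig (H (exist _ y h, clampI t)) | right _ => y end).
  exists c, (proj1_sig x0). split; [|split; [|split; [|split]]].
  - apply (proj2_sig x0).
  - intros y t hy. unfold c. destruct excluded_middle_informative; [|contradiction]. apply (proj2_sig (H _)).
  - intros y hy. unfold c. destruct excluded_middle_informative as [h|]; [|contradiction].
    destruct (Hends (exist _ y h) (clampI 0)) as [H0 _]. specialize (H0 ltac:(simpl; apply clamp_id; lra)).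
    apply (f_equal (@proj1_sig _ _)) in H0. exact H0.
  - intros y hy. unfold c. destruct excluded_middle_informative as [h|]; [|contradiction].
    destruct (Hends (exist _ y h) (clampI 1)) as [_ H1]. specialize (H1 ltac:(simpl; apply clamp_id; lra)).
    apply (f_equal (@proj1_sig _ _)) in H1. exact H1.
  - intros y t hy Ht O HO Oc. unfold c in Oc. destruct excluded_middle_informative as [h|]; [|contradiction].
    assert (HU : weak_top K (fun p => O (proj1_sig p))) by (apply ropen_weak; auto).
    destruct (Hc _ HU (exist _ y h) (clampI t) Oc) as [U' [HU' [U'y [eps [Heps Hf]]]]].
    exists (Ur V K U'). split; [apply weak_ropen; auto|]. split. exists h; auto.
    exists eps; split; auto. intros y' t' [h' Hy'] Ht' Hd. unfold c.
    destruct excluded_middle_informative as [h''|]; [|contradiction].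
    replace h'' with h' by apply proof_irrelevance.
    apply (Hf (exist _ y' h') (clampI t')); auto. simpl. rewrite !clamp_id; auto.
Qed.
End Contr.

Section Comb.
Variable V : Type.
Variable L : (V -> Prop) -> Prop.
Hypothesis HL : is_complex L.
Variable sig : V -> Prop.
Variable ls : list V.
Hypothesis Hls : NoDup ls /\ forall v, sig v <-> In v ls.
Hypothesis Hsig : L sig.

Definition sdec (v : V) := excluded_middle_informative (sig v).
Definition comb (a : V -> R) (b : R) (w : V -> R) : V -> R := fun v => if sdec v then a v else b * w v.
Definition valid (a : V -> R) (b : R) : Prop := (forall v, In v ls -> 0 <= a v) /\ 0 <= b /\ sumL V a ls + b = 1.

Lemma link_inr w : in_real (link L sig) w -> L (supp w) /\ (forall v, supp w v -> ~ sig v) /\ exists rho, L rho /\ subset (supp w) rho /\ subset sig rho.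
Proof. intros Hw. apply inr_L in Hw. exact Hw. Qed.

Lemma L_face s t : L s -> (exists v, t v) -> subset t s -> L t.
Proof. destruct HL as [_ H]; apply H. Qed.

Lemma sig_ne : exists v, sig v.
Proof. destruct HL as [H _]. apply (H sig Hsig). Qed.

Lemma valid_b_le1 a b : valid a b -> b <= 1.
Proof. intros [H1 [H2 H3]]. assert (0 <= sumL V a ls) by (apply sumL_nonneg; auto). lra. Qed.

Lemma comb_real a b w : valid a b -> in_real (link L sig) w ->
  in_real L (comb a b w) /\ subset (supp (comb a b w)) (fun v => sig v \/ supp w v).
Proof.
  intros [Ha [Hb Hsum]] Hw. destruct (link_inr w Hw) as [HLw [Hdis [rho [Hrho [Hwr Hsr]]]]].
  assert (Hsub : subset (supp (comb a b w)) (fun v => sig v \/ supp w v)).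
  { intros v Hv. unfold supp, comb in *. destruct (sdec v); auto. right. intros Hz; apply Hv; rewrite Hz; ring. }
  destruct (inr_list V (link L sig) w Hw) as [lw [Hnw [Hcw Hsw]]].
  destruct (filter_exists V (fun v => ~ sig v) lw) as [lw' [Hnw' Hiw']].
  assert (Hnn : forall v, 0 <= comb a b w v).
  { intros v. unfold comb. destruct (sdec v) as [Hs|Hs]. apply Ha, Hls; auto. apply Rmult_le_pos; auto. apply inr_nonneg with (link L sig); auto. }
  assert (Hdisj : forall v, In v ls -> ~ In v lw').
  { intros v H1 H2. apply Hiw' in H2. destruct H2 as [_ H2]. apply H2, Hls; auto. }
  assert (Hsum' : sumL V (comb a b w) (ls ++ lw') = 1).
  { assert (E1 : sumL V (comb a b w) ls = sumL V a ls).
    { apply sumL_ext. intros v Hv. unfold comb. destruct (sdec v); auto. exfalso; apply n, Hls; auto. }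
    assert (E2 : sumL V (comb a b w) lw' = sumL V (fun v => b * w v) lw').
    { apply sumL_ext. intros v Hv. unfold comb. destruct (sdec v); auto. apply Hiw' in Hv. tauto. }
    assert (E3 : sumL V w lw' = 1).
    { apply (inr_sum_any V (link L sig) w lw' Hw Hnw'). intros v Hv. apply Hcw in Hv as Hv'. apply Hiw'. split; [exact Hv'|apply Hdis; exact Hv]. }
    rewrite sumL_app, E1, E2, sumL_scal, E3. lra. }
  split; auto. split; auto. split.
  - apply L_face with rho; auto.
    + apply NNPP; intro Hn. assert (sumL V (comb a b w) (ls ++ lw') = 0).
      { apply sumL_zero. intros v _. apply NNPP; intro; apply Hn; exists v; auto. } lra.
    + intros v Hv. destruct (Hsub v Hv); auto.
  - exists (ls ++ lw'). split; [|split; auto].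
    + apply NoDup_app; [apply Hls | exact Hnw' | exact Hdisj].
    + intros v Hv. apply in_or_app. destruct (Hsub v Hv) as [Hs|Hs]. left; apply Hls; auto.
      right. apply Hiw'. split; [auto|apply Hdis; exact Hs].
Qed.

Definition pbox (a0 : V -> R) (b0 eta : R) (a : V -> R) (b : R) : Prop :=
  (forall v, In v ls -> Rabs (a v - a0 v) <= eta) /\ Rabs (b - b0) <= eta.

Lemma comb_close a b w a' b' w' e : valid a b -> in_real (link L sig) w' ->
  (forall v, In v ls -> Rabs (a v - a' v) < e) -> Rabs (b - b') < e -> close V w w' e ->
  close V (comb a b w) (comb a' b' w') (2 * e).
Proof. intros Hv Hw' Ha Hb Hc v. unfold comb. destruct (sdec v) as [Hs|Hs].
 - assert (Rabs (a v - a' v) < e) by (apply Ha, Hls; auto). assert (0 <= e) by (pose proof (Rabs_pos (a v - a' v)); lra). lra.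
 - replace (b * w v - b' * w' v) with ((b - b') * w' v + b * (w v - w' v)) by ring.
   eapply Rle_lt_trans. apply Rabs_triang. rewrite !Rabs_mult.
   assert (0 <= w' v <= 1) by (split; [apply inr_nonneg with (link L sig) | apply inr_le1 with (link L sig)]; auto).
   assert (0 <= b <= 1) by (split; [apply Hv | apply valid_b_le1 with a; auto]).
   rewrite (Rabs_right (w' v)) by lra. rewrite (Rabs_right b) by lra.
   specialize (Hc v). assert (Rabs (b - b') * w' v <= Rabs (b - b') * 1) by (apply Rmult_le_compat_l; [apply Rabs_pos|lra]).
   assert (b * Rabs (w v - w' v) <= 1 * Rabs (w v - w' v)) by (apply Rmult_le_compat_r; [apply Rabs_pos|lra]).
   lra. Qed.

Lemma comb_cont (Om : (V -> R) -> Prop) a0 b0 w0 : ropen V L Om -> valid a0 b0 -> in_real (link L sig) w0 ->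
  Om (comb a0 b0 w0) -> exists O, ropen V (link L sig) O /\ O w0 /\ exists eta, 0 < eta /\
    forall w a b, O w -> valid a b -> pbox a0 b0 eta a b -> Om (comb a b w).
Proof.
  intros HOm Hv0 Hw0 Om0.
  destruct (link_inr w0 Hw0) as [HLw0 [Hdis0 [rho0 [Hrho0 [Hwr0 Hsr0]]]]].
  set (S0 := fun v => sig v \/ supp w0 v).
  assert (HS0 : L S0).
  { apply L_face with rho0; auto. destruct sig_ne as [v Hv]; exists v; left; auto.
    intros v [Hv|Hv]; auto. }
  destruct (comb_real a0 b0 w0 Hv0 Hw0) as [Hr0 Hs0].
  destruct HOm as [HOmr HOmo].
  destruct (HOmo S0 HS0 _ Om0 Hs0) as [eps0 [Heps0 Hf0]].
  set (eta := eps0 / 4).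
  set (O := fun w => in_real (link L sig) w /\ forall a b, valid a b -> pbox a0 b0 eta a b -> Om (comb a b w)).
  exists O. split; [|split].
  2:{ split; auto. intros a b Hv [Hpa Hpb]. destruct (comb_real a b w0 Hv Hw0) as [Hr Hs].
      apply Hf0; auto. eapply close_mono. 2:{ apply comb_close; auto.
        intros v Hv'. specialize (Hpa v Hv'). rewrite Rabs_minus_sym. instantiate (1 := eps0/3). unfold eta in Hpa; lra.
        rewrite Rabs_minus_sym. unfold eta in Hpb; lra. apply close_refl; lra. } lra. }
  2:{ exists eta; split. unfold eta; lra. intros w a b [_ Hw] Hv Hp. apply Hw; auto. }
  split. intros p [Hp _]; auto.
  intros F HF w1 [Hw1 Hw1O] Hsub1.
  destruct HF as [HLF [HdisF [rhoF [HrF [HFr HsrF]]]]].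
  set (S := fun v => sig v \/ F v).
  assert (HS : L S).
  { apply L_face with rhoF; auto. destruct sig_ne as [v Hv]; exists v; left; auto. intros v [Hv|Hv]; auto. }
  set (lst := None :: map Some ls).
  set (P0 := fun o : option V => match o with Some v => a0 v | None => b0 end).
  set (aP := fun (P : option V -> R) v => P (Some v)).
  set (Fp := fun e (P : option V -> R) => valid (aP P) (P None) ->
       forall w', in_real (link L sig) w' -> subset (supp w') F -> close V w1 w' e -> Om (comb (aP P) (P None) w')).
  assert (Hin : forall v, In (Some v) lst <-> In v ls).
  { intros v. unfold lst. simpl. rewrite in_map_iff. split. intros [H|[x [H1 H2]]]; [discriminate|]. injection H1; intros ->; auto.
    intros H; right; exists v; auto. }
  destruct (unifN (option V) lst (fun o => P0 o - eta) (fun o => P0 o + eta) P0 Fp) as [es [Hes Hfs]].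
  - intros e e' P He' HF' Hv w' Hw' Hs' Hc. apply HF'; auto. eapply close_mono; [|eauto]; lra.
  - intros P HP. destruct (classic (valid (aP P) (P None))) as [HvP|HnvP].
    +
      assert (HbP : pbox a0 b0 eta (aP P) (P None)).
      { destruct HP as [HP _]. split.
        intros v Hv. assert (In (Some v) lst) by (apply Hin; auto). specialize (HP _ H). unfold aP, P0 in *. apply Rabs_le_intro; lra.
        assert (In None lst) by (left; auto). specialize (HP _ H). unfold P0 in HP. apply Rabs_le_intro; lra. }
      assert (OmP := Hw1O _ _ HvP HbP).
      destruct (comb_real (aP P) (P None) w1 HvP Hw1) as [HrP HsP].
      destruct (HOmo S HS _ OmP) as [eps [Heps Hf]].
      { intros v Hv. destruct (HsP v Hv) as [H|H]; [left; auto|right; apply Hsub1; auto]. }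
      exists (eps / 2). split; [lra|]. intros P' HP' Hd HvP' w' Hw' Hs' Hc.
      destruct (comb_real (aP P') (P' None) w' HvP' Hw') as [HrP' HsP'].
      apply Hf; auto.
      { intros v Hv. destruct (HsP' v Hv) as [H|H]; [left; auto|right; apply Hs'; auto]. }
      replace eps with (2 * (eps / 2)) by field. apply comb_close; auto.
      intros v Hv. rewrite Rabs_minus_sym. apply Hd, Hin; auto.
      rewrite Rabs_minus_sym. apply Hd; left; auto.
    + (* invalid point: nearby points invalid *)
      assert (Hcase : (exists v, In v ls /\ aP P v < 0) \/ P None < 0 \/ sumL V (aP P) ls + P None <> 1).
      { apply NNPP; intro Hn. apply HnvP. split; [|split].
        - intros v Hv. apply Rnot_lt_le. intro Hlt. apply Hn. left; exists v; auto.
        - apply Rnot_lt_le. intro Hlt. apply Hn; right; left; auto.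
        - apply NNPP; intro Hne; apply Hn; right; right; auto. }
      destruct Hcase as [[v [Hv Hneg]]|[Hneg|Hne]].
      * exists (- aP P v). split; [lra|]. intros P' _ Hd [Ha' _]. exfalso.
        assert (Hd' := Hd (Some v) (proj2 (Hin v) Hv)). specialize (Ha' v Hv). unfold aP in *.
        apply Rabs_lt_inv in Hd'. lra.
      * exists (- P None). split; [lra|]. intros P' _ Hd [_ [Hb' _]]. exfalso.
        assert (Hd' := Hd None (or_introl eq_refl)). apply Rabs_lt_inv in Hd'. lra.
      * set (g := Rabs (sumL V (aP P) ls + P None - 1)).
        assert (Hg : 0 < g) by (apply Rabs_pos_lt; lra).
        set (n := INR (length ls)). assert (Hn : 0 <= n) by apply pos_INR.
        exists (g / (2 * (n + 1))). split. apply Rdiv_lt_0_compat; lra.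
        intros P' _ Hd [_ [_ Hs']]. exfalso.
        assert (H1 : Rabs (sumL V (aP P') ls - sumL V (aP P) ls) <= n * (g / (2 * (n + 1)))).
        { apply sumL_abs_le. intros v Hv. left. apply Hd, Hin; auto. }
        assert (H2 := Hd None (or_introl eq_refl)).
        apply Rabs_le_inv in H1. apply Rabs_lt_inv in H2.
        assert (n * (g / (2 * (n + 1))) + g / (2 * (n + 1)) = g / 2) by (field; lra).
        unfold g in *. destruct (Rcase_abs (sumL V (aP P) ls + P None - 1)) as [Hlt|Hge].
        rewrite Rabs_left in * by auto. lra. rewrite Rabs_right in * by auto. lra.
  - exists es. split; auto. intros w' Hw' Hs' Hc. split; auto.
    intros a b Hvld Hp.
    set (P := fun o : option V => match o with Some v => if excluded_middle_informative (In v ls) then a v else a0 v | None => b end).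
    assert (HaP : forall v, In v ls -> aP P v = a v).
    { intros v Hv. unfold aP, P. destruct excluded_middle_informative; tauto. }
    assert (Hcomb : comb (aP P) (P None) w' = comb a b w').
    { apply functional_extensionality; intro v. unfold comb. destruct (sdec v) as [Hs|Hs]; auto. apply HaP, Hls; auto. }
    rewrite <- Hcomb. apply (Hfs P).
    + destruct Hp as [Hpa Hpb]. split.
      * intros o Ho. destruct o as [v|]. assert (Hv' : In v ls) by (apply Hin; auto).
        specialize (Hpa v Hv'). change (P (Some v)) with (aP P v). rewrite (HaP v Hv'). simpl (P0 (Some v)).
        apply Rabs_le_inv in Hpa. lra.
        simpl. unfold P0. apply Rabs_le_inv in Hpb. lra.
      * intros o Ho. destruct o as [v|]. simpl. destruct excluded_middle_informative; auto. exfalso; apply Ho, Hin; auto.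
        exfalso; apply Ho; left; auto.
    + destruct Hvld as [Hva [Hvb Hvs]]. split; [|split].
      intros v Hv. rewrite HaP; auto. simpl; auto.
      rewrite (sumL_ext V (aP P) a ls); auto.
    + auto.
    + auto.
    + auto.
Qed.
End Comb.

Section Step.
Variable V : Type.
Variable L L0 : (V -> Prop) -> Prop.
Hypothesis HL : is_complex L.
Hypothesis HL0 : is_subcomplex L0 L.
Hypothesis Hlink : forall sigma, L0 sigma -> contractible (weak_top (link L sigma)).
Variable k : nat.

Definition card_eq (s : V -> Prop) (n : nat) : Prop := exists l, NoDup l /\ length l = n /\ forall v, s v <-> In v l.

Definition lst (s : V -> Prop) : list V :=
  match excluded_middle_informative (exists l, NoDup l /\ forall v, s v <-> In v l) with
  | left h => proj1_sig (constructive_indefinite_description _ h) | right _ => nil end.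

Lemma lst_spec s : (exists l, NoDup l /\ forall v, s v <-> In v l) -> NoDup (lst s) /\ forall v, s v <-> In v (lst s).
Proof. intros h. unfold lst. destruct excluded_middle_informative as [h'|]; [|contradiction].
 destruct (constructive_indefinite_description _ h') as [l Hl]; simpl; auto. Qed.

Lemma lst_card s n : card_eq s n -> NoDup (lst s) /\ (forall v, s v <-> In v (lst s)) /\ length (lst s) = n.
Proof. intros [l [Hn [Hlen Hi]]]. destruct (lst_spec s) as [H1 H2]. exists l; auto.
 split; auto. split; auto. rewrite <- Hlen. apply Permutation_length. apply NoDup_Permutation; auto.
 intros v. rewrite <- H2, Hi. tauto. Qed.

Lemma L0_L s : L0 s -> L s.
Proof. destruct HL0 as [_ H]; auto. Qed.

Definition SP (s : V -> Prop) := L0 s /\ card_eq s (S k).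

Definition CD (s : V -> Prop) (p : ((V -> R) -> R -> (V -> R)) * (V -> R)) : Prop :=
  L0 s -> CProps V (link L s) (fst p) (snd p).
Lemma CD_ex s : exists p, CD s p.
Proof. destruct (classic (L0 s)) as [H|H].
 - destruct (contr_raw V (link L s) (Hlink s H)) as [c [y0 Hc]]. exists (c, y0). intros _; auto.
 - exists ((fun y _ => y), (fun _ => 0)). intros H'; contradiction. Qed.
Definition cdat (s : V -> Prop) := proj1_sig (constructive_indefinite_description _ (CD_ex s)).
Definition cc (s : V -> Prop) := fst (cdat s).
Definition y0 (s : V -> Prop) := snd (cdat s).
Lemma cc_props s : L0 s -> CProps V (link L s) (cc s) (y0 s).
Proof. intros H. unfold cc, y0, cdat. destruct (constructive_indefinite_description _ (CD_ex s)) as [p Hp]. simpl. apply Hp; auto. Qed.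

Definition mass (s : V -> Prop) (x : V -> R) := sumL V x (lst s).
Definition sv s x := 1 - mass s x.
Definition mn s x := minL V x (lst s).

Definition CR s x := SP s /\ sv s x <= mn s x / 2.
Definition InR s x := SP s /\ sv s x < mn s x / 2.

Definition gapf s x := Rmax 0 (mn s x / 2 - sv s x).
Definition su s x u := sv s x + u * gapf s x / 2.
Definition th s x u := if Rlt_dec 0 (sv s x) then Rmin 1 (u * gapf s x / sv s x) else 1.
Definition ydir s x : V -> R :=
  if Rlt_dec 0 (sv s x) then (fun v => if sdec V s v then 0 else x v / sv s x) else y0 s.
Definition wdir s x u := cc s (ydir s x) (th s x u).
Definition acoef s x u := (1 - su s x u) / (1 - sv s x).
Definition aF s x u : V -> R := fun v => acoef s x u * x v.
Definition Fm s x u := comb V s (aF s x u) (su s x u) (wdir s x u).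

Definition Hm (x : V -> R) (u : R) : V -> R :=
  match excluded_middle_informative (exists s, InR s x) with
  | left h => Fm (proj1_sig (constructive_indefinite_description _ h)) x u
  | right _ => x end.

Section Basic.
Variable s : V -> Prop.
Hypothesis Hs : SP s.

Lemma SP_lst : NoDup (lst s) /\ (forall v, s v <-> In v (lst s)) /\ length (lst s) = S k.
Proof. apply lst_card, Hs. Qed.
Lemma SP_ls : NoDup (lst s) /\ (forall v, s v <-> In v (lst s)).
Proof. destruct SP_lst as [A [B _]]; auto. Qed.
Lemma SP_L : L s.
Proof. apply L0_L, Hs. Qed.
Lemma lst_ne : lst s <> nil.
Proof. destruct SP_lst as [_ [_ H]]. intros E; rewrite E in H; discriminate. Qed.

Variable x : V -> R.
Hypothesis Hx : in_real L x.

Lemma mass_bounds : 0 <= mass s x <= 1.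
Proof. split. apply sumL_nonneg; intros; apply inr_nonneg with L; auto. apply (inr_sum_le1 V L x); auto. apply SP_ls. Qed.
Lemma sv_bounds : 0 <= sv s x <= 1.
Proof. unfold sv; pose proof mass_bounds; lra. Qed.
Lemma out_le_sv v : ~ s v -> x v <= sv s x.
Proof. intros Hv. assert (Hnd : NoDup (v :: lst s)).
 { constructor. intros H; apply Hv, SP_ls; auto. apply SP_ls. }
 pose proof (inr_sum_le1 V L x _ Hx Hnd). rewrite sumL_cons in H. unfold sv, mass. lra. Qed.
Lemma mn_le v : s v -> mn s x <= x v.
Proof. intros Hv. apply minL_le, SP_ls; auto. Qed.
Lemma mn_nonneg : 0 <= mn s x.
Proof. apply minL_ge. apply lst_ne. intros; apply inr_nonneg with L; auto. Qed.
Lemma mn_le_mass : mn s x <= mass s x.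
Proof. destruct (minL_in V x (lst s) lst_ne) as [v [Hv Heq]]. unfold mn. rewrite Heq.
 apply sumL_ge_elem; auto. intros; apply inr_nonneg with L; auto. Qed.
Lemma mn_pos_sv_lt1 : 0 < mn s x -> sv s x < 1.
Proof. intros H. pose proof mn_le_mass. unfold sv; lra. Qed.
Lemma mn_pos_in v : 0 < mn s x -> s v -> x v <> 0.
Proof. intros H Hv. pose proof (mn_le v Hv). lra. Qed.

Lemma sv_zero_supp : sv s x = 0 -> subset (supp x) s.
Proof. intros H v Hv. apply NNPP; intro Hn. pose proof (out_le_sv v Hn). pose proof (inr_nonneg V L x v Hx).
 apply Hv; lra. Qed.

End Basic.

Lemma card_le_nodup (t : V -> Prop) (l : list V) n : NoDup l -> (forall v, In v l -> t v) -> card_le V t n -> (length l <= n)%nat.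
Proof. intros Hn Hi [l' [Hl' Hc]]. assert (incl l l') by (intros v Hv; apply Hc, Hi; auto).
 pose proof (NoDup_incl_length Hn H). lia. Qed.

Lemma W_sub_full s x : SP s -> W V L L0 k x -> subset (supp x) s -> forall v, s v -> x v <> 0.
Proof. intros Hs [Hx Hw] Hsub v0 Hv0 Hz. destruct (SP_lst s Hs) as [Hn [Hi Hlen]].
 destruct Hw as [Hw|Hw]; apply Hw.
 - apply L0_face with L s; auto. apply Hs. apply inr_supp_ne with L; auto.
 - exists (remove (vdec V) v0 (lst s)). split.
   + pose proof (remove_length_lt (vdec V) (lst s) v0 (proj1 (Hi v0) Hv0)). lia.
   + intros v Hv. apply in_in_remove. intros ->; apply Hv; auto. apply Hi, Hsub; auto. Qed.

Lemma CR_mn_pos s x : W V L L0 k x -> CR s x -> 0 < mn s x.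
Proof. intros Hw [Hs Hc]. assert (Hx : in_real L x) by apply Hw.
 pose proof (mn_nonneg s Hs x Hx). destruct (Rle_lt_or_eq_dec _ _ H) as [Hlt|Heq]; auto. exfalso.
 pose proof (sv_bounds s Hs x Hx). assert (Hsv : sv s x = 0) by lra.
 pose proof (W_sub_full s x Hs Hw (sv_zero_supp s Hs x Hx Hsv)) as Hf.
 destruct (minL_in V x (lst s) (lst_ne s Hs)) as [v [Hv Hmv]]. unfold mn in Heq. rewrite Hmv in Heq.
 apply (Hf v); auto. apply (SP_ls s Hs); auto. Qed.

Lemma InR_mn_pos s x : in_real L x -> InR s x -> 0 < mn s x.
Proof. intros Hx [Hs Hc]. pose proof (sv_bounds s Hs x Hx). lra. Qed.

Lemma pred_ext (s t : V -> Prop) : (forall v, s v <-> t v) -> s = t.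
Proof. intros H. apply functional_extensionality; intro v. apply propositional_extensionality; auto. Qed.

Lemma SP_incl_eq s t : SP s -> SP t -> (forall v, s v -> t v) -> s = t.
Proof. intros Hs Ht H. destruct (SP_lst s Hs) as [Hn1 [Hi1 Hl1]]. destruct (SP_lst t Ht) as [Hn2 [Hi2 Hl2]].
 assert (incl (lst s) (lst t)) by (intros v Hv; apply Hi2, H, Hi1; auto).
 assert (H2 : incl (lst t) (lst s)) by (apply NoDup_length_incl; auto; lia).
 apply pred_ext. intros v; split; auto. intros Hv. apply Hi1, H2, Hi2; auto. Qed.

Lemma slack s s' x0 q e : SP s -> SP s' -> in_real L x0 -> in_real L q -> sv s x0 <= mn s x0 / 2 ->
  0 < mn s x0 -> e <= mn s x0 / 4 -> close V x0 q e -> sv s' q < mn s' q / 2 -> s' = s.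
Proof. intros Hs Hs' Hx0 Hq Hc Hm He Hcl Hc'.
 destruct (classic (forall v, s v -> s' v)) as [H1|H1]. symmetry; apply SP_incl_eq; auto.
 destruct (classic (forall v, s' v -> s v)) as [H2|H2]. apply SP_incl_eq; auto.
 exfalso. apply not_all_ex_not in H1. destruct H1 as [v Hv]. apply imply_to_and in Hv. destruct Hv as [Hv1 Hv2].
 apply not_all_ex_not in H2. destruct H2 as [w Hw]. apply imply_to_and in Hw. destruct Hw as [Hw1 Hw2].
 pose proof (out_le_sv s Hs x0 Hx0 w Hw2). pose proof (mn_le s Hs x0 v Hv1).
 pose proof (out_le_sv s' Hs' q Hq v Hv2). pose proof (mn_le s' Hs' q w Hw1).
 pose proof (Hcl v) as Av. pose proof (Hcl w) as Aw. apply Rabs_lt_inv in Av. apply Rabs_lt_inv in Aw.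
 lra. Qed.

Lemma InR_uniq s s' x : in_real L x -> InR s x -> InR s' x -> s' = s.
Proof. intros Hx [Hs Hc] [Hs' Hc']. pose proof (InR_mn_pos s x Hx (conj Hs Hc)).
 apply (slack s s' x x (mn s x / 4)); auto. lra. lra. apply close_refl. lra. Qed.

Lemma Hm_InR s x u : in_real L x -> InR s x -> Hm x u = Fm s x u.
Proof. intros Hx Hr. unfold Hm. destruct excluded_middle_informative as [h|h].
 - destruct (constructive_indefinite_description _ h) as [s' Hs']. simpl. rewrite (InR_uniq s s' x); auto.
 - exfalso; apply h; exists s; auto. Qed.
Lemma Hm_none x u : ~ (exists s, InR s x) -> Hm x u = x.
Proof. intros H. unfold Hm. destruct excluded_middle_informative; tauto. Qed.

Lemma notcard_k s z : SP s -> (forall v, s v -> z v <> 0) -> ~ card_le V (supp z) k.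
Proof. intros Hs Hz Hc. destruct (SP_lst s Hs) as [Hn [Hi Hl]].
 pose proof (card_le_nodup (supp z) (lst s) k Hn (fun v Hv => Hz v (proj2 (Hi v) Hv)) Hc). lia. Qed.
Lemma notcard_Sk s z v0 : SP s -> (forall v, s v -> z v <> 0) -> ~ s v0 -> z v0 <> 0 -> ~ card_le V (supp z) (S k).
Proof. intros Hs Hz Hv0 Hz0 Hc. destruct (SP_lst s Hs) as [Hn [Hi Hl]].
 assert (Hn' : NoDup (v0 :: lst s)). { constructor; auto. intros H; apply Hv0, Hi; auto. }
 assert (Hin : forall v, In v (v0 :: lst s) -> supp z v). { intros v [<-|Hv]; auto. apply Hz, Hi; auto. }
 pose proof (card_le_nodup (supp z) _ (S k) Hn' Hin Hc). simpl in H. lia. Qed.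

Lemma Wk_of s z : SP s -> in_real L z -> (forall v, s v -> z v <> 0) -> W V L L0 k z.
Proof. intros Hs Hz H. split; auto. right. apply notcard_k with s; auto. Qed.
Lemma WSk_of s z v0 : SP s -> in_real L z -> (forall v, s v -> z v <> 0) -> ~ s v0 -> z v0 <> 0 -> W V L L0 (S k) z.
Proof. intros Hs Hz H Hv0 Hz0. split; auto. right. apply notcard_Sk with s v0; auto. Qed.

Section FmFacts.
Variable s : V -> Prop.
Hypothesis Hs : SP s.
Variable x : V -> R.
Hypothesis Hx : in_real L x.
Hypothesis Hmn : 0 < mn s x.
Variable u : R.
Hypothesis Hu : 0 <= u <= 1.

Lemma gapf_bounds : 0 <= gapf s x <= mn s x / 2.
Proof. unfold gapf. pose proof (sv_bounds s Hs x Hx). unfold Rmax; destruct Rle_dec; lra. Qed.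
Lemma su_bounds : sv s x <= su s x u < 1.
Proof. unfold su. pose proof gapf_bounds. pose proof (sv_bounds s Hs x Hx). pose proof (mn_pos_sv_lt1 s Hs x Hx Hmn).
 pose proof (mn_le_mass s Hs x Hx). pose proof (mass_bounds s Hs x Hx).
 assert (0 <= u * gapf s x <= gapf s x) by (split; [apply Rmult_le_pos|]; nra).
 split. lra. unfold gapf in *. unfold Rmax in *. destruct Rle_dec; unfold sv in *; lra. Qed.
Lemma acoef_pos : 0 < acoef s x u.
Proof. unfold acoef. pose proof su_bounds. pose proof (mn_pos_sv_lt1 s Hs x Hx Hmn). apply Rdiv_lt_0_compat; lra. Qed.

Lemma Fm_valid : valid V (lst s) (aF s x u) (su s x u).
Proof. pose proof su_bounds. pose proof (sv_bounds s Hs x Hx). pose proof acoef_pos.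
 split; [|split]. intros v _. unfold aF. apply Rmult_le_pos; [lra|]. apply inr_nonneg with L; auto.
 lra. unfold aF. rewrite sumL_scal. fold (mass s x). unfold acoef.
 pose proof (mn_pos_sv_lt1 s Hs x Hx Hmn). unfold sv in *. field. lra. Qed.

Lemma out_support_list : exists lo, NoDup lo /\ (forall v, In v lo <-> x v <> 0 /\ ~ s v) /\ sumL V x lo = sv s x.
Proof. destruct (inr_list V L x Hx) as [lx [Hnx [Hcx _]]].
 destruct (filter_exists V (fun v => x v <> 0 /\ ~ s v) lx) as [lo [Hno Hio]].
 exists lo. split; auto. split. intros v. rewrite Hio. split; [tauto|]. intros [H1 H2]; split; auto.
 destruct (SP_ls s Hs) as [Hn Hi].
 assert (Hsum : sumL V x (lst s ++ lo) = 1).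
 { apply (inr_sum_any V L x); auto. apply NoDup_app; auto. intros v H1 H2. apply Hio in H2. apply H2, Hi; auto.
   intros v Hv. apply in_or_app. destruct (classic (s v)). left; apply Hi; auto. right; apply Hio; auto. }
 rewrite sumL_app in Hsum. unfold sv, mass. lra. Qed.

Lemma sv_pos_out : 0 < sv s x -> exists v, ~ s v /\ x v <> 0.
Proof. intros H. destruct out_support_list as [lo [Hn [Hi Hsum]]]. apply NNPP; intro Hn'.
 assert (sumL V x lo = 0). { apply sumL_zero. intros v Hv. apply Hi in Hv. exfalso; apply Hn'; exists v; tauto. } lra. Qed.

Lemma ydir_real : 0 < sv s x -> in_real (link L s) (ydir s x) /\ (forall v, ydir s x v <> 0 -> x v <> 0 /\ ~ s v).
Proof. intros Hsv. unfold ydir. destruct Rlt_dec as [_|]; [|lra].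
 set (y := fun v => if sdec V s v then 0 else x v / sv s x).
 assert (Hsupp : forall v, y v <> 0 -> x v <> 0 /\ ~ s v).
 { intros v Hv. unfold y in Hv. destruct (sdec V s v); [lra|]. split; auto. intros Hz; apply Hv; rewrite Hz; unfold Rdiv; ring. }
 split; auto. destruct out_support_list as [lo [Hn [Hi Hsum]]].
 split; [|split].
 - intros v. unfold y. destruct (sdec V s v); [lra|]. unfold Rdiv; apply Rmult_le_pos; [apply inr_nonneg with L; auto | left; apply Rinv_0_lt_compat; lra].
 - split; [|split].
   + apply (L_face V L HL) with (supp x); auto. apply (inr_L V L x Hx).
     destruct (sv_pos_out Hsv) as [v [Hv1 Hv2]]. exists v. unfold supp, y. destruct (sdec V s v); [contradiction|].
     intros Hz. apply Hv2. apply (f_equal (fun t => t * sv s x)) in Hz. field_simplify in Hz; lra.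
     intros v Hv. apply Hsupp; auto.
   + intros v Hv. apply Hsupp; auto.
   + exists (supp x). split. apply (inr_L V L x Hx). split. intros v Hv; apply Hsupp; auto.
     intros v Hv. apply mn_pos_in with s; auto.
 - exists lo. split; auto. split. intros v Hv. apply Hi. apply Hsupp; auto.
   change (sumL V y lo = 1). rewrite (sumL_ext V y (fun v => / sv s x * x v) lo). rewrite sumL_scal, Hsum. field; lra.
   intros v Hv. unfold y. destruct (sdec V s v). exfalso; apply Hi in Hv; tauto. unfold Rdiv; ring. Qed.

Lemma wdir_real : in_real (link L s) (wdir s x u).
Proof. destruct (cc_props s (proj1 Hs)) as [Hy0 [Hcr _]]. unfold wdir.
 destruct (Rlt_dec 0 (sv s x)) as [Hp|Hp].
 - apply Hcr. apply ydir_real; auto.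
 - unfold ydir. destruct Rlt_dec; [contradiction|]. apply Hcr; auto. Qed.

Lemma Fm_real : in_real L (Fm s x u) /\ subset (supp (Fm s x u)) (fun v => s v \/ supp (wdir s x u) v).
Proof. apply (comb_real V L HL s (lst s) (SP_ls s Hs)). apply Fm_valid. apply wdir_real. Qed.

Lemma Fm_on_s v : s v -> Fm s x u v <> 0.
Proof. intros Hv. unfold Fm, comb. destruct (sdec V s v); [|contradiction]. unfold aF.
 pose proof acoef_pos. pose proof (mn_pos_in s Hs x v Hmn Hv). pose proof (inr_nonneg V L x v Hx).
 intros Hz. apply Rmult_integral in Hz. destruct Hz; lra. Qed.

Lemma Fm_out : 0 < su s x u -> exists v, ~ s v /\ Fm s x u v <> 0.
Proof. intros Hsu. destruct (inr_supp_ne V (link L s) _ wdir_real) as [v Hv].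
 destruct (link_inr V L s _ wdir_real) as [_ [Hd _]]. exists v. split. apply Hd; auto.
 unfold Fm, comb. destruct (sdec V s v). exfalso; apply (Hd v); auto.
 intros Hz. apply Rmult_integral in Hz. destruct Hz; lra. Qed.

Lemma Fm_id : u = 0 \/ gapf s x = 0 -> Fm s x u = x.
Proof. intros Hug. assert (Hsu : su s x u = sv s x) by (unfold su; destruct Hug as [->| ->]; lra).
 apply functional_extensionality; intro v. unfold Fm, comb, aF, acoef. rewrite Hsu.
 pose proof (mn_pos_sv_lt1 s Hs x Hx Hmn).
 destruct (sdec V s v) as [Hv|Hv]. field; lra.
 unfold wdir. destruct (Rlt_dec 0 (sv s x)) as [Hp|Hp].
 - assert (Hth : th s x u = 0).
   { unfold th. destruct Rlt_dec; [|contradiction]. destruct Hug as [->| ->]; unfold Rmin; destruct Rle_dec; try lra;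
     unfold Rdiv in *; rewrite ?Rmult_0_l, ?Rmult_0_r in *; lra. }
   rewrite Hth. destruct (cc_props s (proj1 Hs)) as [_ [_ [Hc0 _]]]. rewrite Hc0 by (apply ydir_real; auto).
   unfold ydir. destruct Rlt_dec; [|contradiction]. destruct (sdec V s v); [contradiction|]. field; lra.
 - pose proof (sv_bounds s Hs x Hx). assert (sv s x = 0) by lra. rewrite H1, Rmult_0_l.
   pose proof (out_le_sv s Hs x Hx v Hv). pose proof (inr_nonneg V L x v Hx). lra. Qed.
End FmFacts.

Lemma W_mono x : W V L L0 (S k) x -> W V L L0 k x.
Proof. intros [Hx [H|H]]; split; auto. right. intros [l [Hl Hi]]. apply H. exists l; split; auto. Qed.

Lemma InR_gap s x : in_real L x -> InR s x -> 0 < gapf s x.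
Proof. intros Hx [Hs Hc]. unfold gapf, Rmax. destruct Rle_dec; lra. Qed.

Lemma Hm_0 x : in_real L x -> Hm x 0 = x.
Proof. intros Hx. destruct (classic (exists s, InR s x)) as [[s Hs]|Hn].
 - rewrite (Hm_InR s x 0 Hx Hs). apply Fm_id; auto. apply Hs. apply InR_mn_pos; auto. lra.
 - apply Hm_none; auto. Qed.

Lemma Hm_Wk x u : W V L L0 k x -> 0 <= u <= 1 -> W V L L0 k (Hm x u).
Proof. intros Hw Hu. assert (Hx : in_real L x) by apply Hw.
 destruct (classic (exists s, InR s x)) as [[s Hs]|Hn].
 - rewrite (Hm_InR s x u Hx Hs). assert (Hm0 := InR_mn_pos s x Hx Hs). destruct Hs as [Hs Hc].
   apply Wk_of with s; auto. apply Fm_real; auto. intros v Hv. apply Fm_on_s; auto.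
 - rewrite Hm_none; auto. Qed.

Lemma supp_eq_SP s x : SP s -> in_real L x -> subset (supp x) s -> (forall v, s v -> x v <> 0) -> ~ W V L L0 (S k) x.
Proof. intros Hs Hx Hsub Hf [_ Hw]. assert (Heq : supp x = s) by (apply pred_ext; intros v; split; auto; apply Hf).
 destruct Hw as [Hw|Hw]; apply Hw; rewrite Heq. apply Hs.
 destruct (SP_lst s Hs) as [_ [Hi Hl]]. exists (lst s). split. lia. intros v Hv; apply Hi; auto. Qed.

Lemma Hm_WSk x u : W V L L0 (S k) x -> 0 <= u <= 1 -> W V L L0 (S k) (Hm x u).
Proof. intros Hw Hu. assert (Hx : in_real L x) by apply Hw.
 destruct (classic (exists s, InR s x)) as [[s Hs]|Hn].
 - rewrite (Hm_InR s x u Hx Hs). assert (Hm0 := InR_mn_pos s x Hx Hs). destruct Hs as [Hs Hc].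
   assert (Hsv : 0 < sv s x).
   { pose proof (sv_bounds s Hs x Hx) as Hb. destruct (Rle_lt_or_eq_dec 0 (sv s x) (proj1 Hb)) as [H0|H0]; [auto|].
     exfalso. assert (Hsub := sv_zero_supp s Hs x Hx (eq_sym H0)).
     apply (supp_eq_SP s x Hs Hx Hsub); auto. apply W_sub_full; auto. apply W_mono; auto. }
   pose proof (su_bounds s Hs x Hx Hm0 u Hu).
   destruct (Fm_out s Hs x Hx Hm0 u Hu) as [v0 [Hv0 Hz0]]. lra.
   apply WSk_of with s v0; auto. apply Fm_real; auto. intros v Hv. apply Fm_on_s; auto.
 - rewrite Hm_none; auto. Qed.

Lemma Hm_1 x : W V L L0 k x -> W V L L0 (S k) (Hm x 1).
Proof. intros Hw. assert (Hx : in_real L x) by apply Hw.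
 destruct (classic (exists s, InR s x)) as [[s Hs]|Hn].
 - rewrite (Hm_InR s x 1 Hx Hs). assert (Hm0 := InR_mn_pos s x Hx Hs). assert (Hg := InR_gap s x Hx Hs). destruct Hs as [Hs Hc].
   assert (Hu : 0 <= 1 <= 1) by lra.
   pose proof (sv_bounds s Hs x Hx).
   destruct (Fm_out s Hs x Hx Hm0 1 Hu) as [v0 [Hv0 Hz0]]. unfold su; lra.
   apply WSk_of with s v0; auto. apply Fm_real; auto. intros v Hv. apply Fm_on_s; auto.
 - rewrite Hm_none; auto. apply NNPP; intro Hn'. apply Hn.
   destruct Hw as [_ Hw]. unfold W in Hn'. apply not_and_or in Hn'. destruct Hn' as [Hn'|Hn']; [contradiction|].
   apply not_or_and in Hn'. destruct Hn' as [HL0x Hc]. apply NNPP in HL0x. apply NNPP in Hc.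
   assert (Hck : ~ card_le V (supp x) k) by (destruct Hw; tauto).
   destruct Hc as [l [Hl Hcov]]. destruct (filter_exists V (supp x) l) as [l' [Hn' Hi']].
   assert (Hlen' : (length l' <= S k)%nat).
   { assert (incl l' l) by (intros v Hv; apply Hi'; auto). pose proof (NoDup_incl_length Hn' H). lia. }
   assert (Hlen'' : length l' = S k).
   { destruct (Nat.eq_dec (length l') (S k)); auto. exfalso. apply Hck. exists l'. split. lia.
     intros v Hv. apply Hi'. split; auto. }
   assert (HSP : SP (supp x)). { split; auto. exists l'. split; auto. split; auto. intros v. rewrite Hi'. split; [|tauto]. intros Hv; split; auto. }
   exists (supp x). split; auto.
   destruct (SP_lst _ HSP) as [Hn2 [Hi2 _]].
   assert (Hm1 : mass (supp x) x = 1) by (apply (inr_sum_any V L x); auto; intros v Hv; apply Hi2; auto).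
   assert (Hmp : 0 < mn (supp x) x).
   { destruct (minL_in V x (lst (supp x)) (lst_ne _ HSP)) as [v [Hv Heq]]. unfold mn; rewrite Heq.
     assert (x v <> 0) by (apply Hi2; auto). pose proof (inr_nonneg V L x v Hx). lra. }
   unfold sv. lra.
Qed.

End Step.

Section Cont.
Variable V : Type.
Variable L L0 : (V -> Prop) -> Prop.
Hypothesis HL : is_complex L.
Hypothesis HL0 : is_subcomplex L0 L.
Hypothesis Hlink : forall sigma, L0 sigma -> contractible (weak_top (link L sigma)).
Variable k : nat.

Notation SPk := (SP V L0 k).

Lemma minL_close (f g : V -> R) l e : l <> nil -> (forall v, In v l -> Rabs (f v - g v) <= e) -> Rabs (minL V f l - minL V g l) <= e.
Proof. intros Hl H. destruct (minL_in V f l Hl) as [v1 [Hv1 E1]]. destruct (minL_in V g l Hl) as [v2 [Hv2 E2]].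
 pose proof (minL_le V f l v2 Hv2). pose proof (minL_le V g l v1 Hv1).
 pose proof (Rabs_le_inv _ _ (H v1 Hv1)). pose proof (Rabs_le_inv _ _ (H v2 Hv2)). apply Rabs_le_intro. lra. Qed.

Lemma close_le (p q : V -> R) e : close V p q e -> forall v, Rabs (p v - q v) <= e.
Proof. intros H v; left; apply H. Qed.

Lemma simplex_list (s : V -> Prop) : L s -> exists l, NoDup l /\ forall v, s v <-> In v l.
Proof. intros Hs. destruct HL as [H _]. destruct (H s Hs) as [[l Hl] _].
 destruct (filter_exists V s l) as [l' [Hn Hi]]. exists l'. split; auto. intros v. rewrite Hi. split; [|tauto]. intros; split; auto. Qed.

Fixpoint subs (l : list V) : list (list V) :=
  match l with nil => nil :: nil | a :: l' => subs l' ++ map (cons a) (subs l') end.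

Lemma subs_spec (lr : list V) : NoDup lr -> forall l, incl l lr ->
  exists l', In l' (subs lr) /\ NoDup l' /\ forall v, In v l <-> In v l'.
Proof. induction lr as [|a lr IH]; intros Hn l Hl.
 - exists nil. split; [left; auto|]. split; [constructor|]. intros v; split; [intros Hv; apply (Hl v Hv)|intros []].
 - inversion Hn; subst. set (l1 := remove (vdec V) a l).
   assert (Hl1 : incl l1 lr). { intros v Hv. apply in_remove in Hv. destruct Hv as [Hv Hne]. destruct (Hl v Hv); [congruence|auto]. }
   destruct (IH H2 l1 Hl1) as [l1' [Hin [Hn1 Hi1]]].
   destruct (classic (In a l)) as [Ha|Ha].
   + exists (a :: l1'). split. simpl. apply in_or_app; right. apply in_map; auto.
     split. constructor; auto. intros Hin'. apply Hi1 in Hin'. apply in_remove in Hin'. tauto.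
     intros v. split. intros Hv. destruct (vdec V v a) as [->|Hne]; [left; auto|right; apply Hi1, in_in_remove; auto].
     intros [<-|Hv]; auto. apply Hi1 in Hv. apply in_remove in Hv; tauto.
   + exists l1'. split. simpl. apply in_or_app; left; auto. split; auto.
     intros v. rewrite <- Hi1. split. intros Hv. apply in_in_remove; auto. intros ->; contradiction.
     intros Hv; apply in_remove in Hv; tauto. Qed.

Lemma min_pos_fin (LL : list (list V)) (h : list V -> R) : (forall l, In l LL -> 0 < h l) ->
  exists d, 0 < d /\ forall l, In l LL -> d <= h l.
Proof. induction LL as [|a LL IH]; intros H. exists 1; split; [lra|]; intros _ [].
 destruct IH as [d [Hd Hf]]. intros; apply H; right; auto.
 exists (Rmin d (h a)). split. apply Rmin_glb_lt; auto. apply H; left; auto.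
 intros l [<-|Hl]. apply Rmin_r. eapply Rle_trans; [apply Rmin_l|]. auto. Qed.

Lemma sumL_perm (f : V -> R) l1 l2 : Permutation l1 l2 -> sumL V f l1 = sumL V f l2.
Proof. induction 1; auto. rewrite !sumL_cons, IHPermutation; auto. rewrite !sumL_cons; ring. congruence. Qed.
Lemma sumL_same (f : V -> R) l1 l2 : NoDup l1 -> NoDup l2 -> (forall v, In v l1 <-> In v l2) -> sumL V f l1 = sumL V f l2.
Proof. intros. apply sumL_perm, NoDup_Permutation; auto. Qed.

Definition Gv (x : V -> R) (l : list V) := 1 - sumL V x l - minL V x l / 2.

Lemma gap_unif x0 rho : in_real L x0 -> L rho ->
  (forall s, SPk s -> subset s rho -> sv V s x0 > mn V s x0 / 2) ->
  exists d, 0 < d /\ forall s, SPk s -> subset s rho -> d <= sv V s x0 - mn V s x0 / 2.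
Proof.
  intros Hx0 Hr Hgap. destruct (simplex_list rho Hr) as [lr [Hnr Hir]].
  set (same := fun (l1 l2 : list V) => forall v, In v l1 <-> In v l2).
  set (h := fun l' => if excluded_middle_informative (NoDup l' /\ exists s, SPk s /\ subset s rho /\ same (lst V s) l') then Gv x0 l' else 1).
  assert (HG : forall s l', SPk s -> NoDup l' -> same (lst V s) l' -> Gv x0 l' = sv V s x0 - mn V s x0 / 2).
  { intros s l' Hs Hn' Hsm. unfold Gv, sv, mass, mn. destruct (SP_lst V L0 k s Hs) as [Hn [_ _]].
    rewrite (sumL_same x0 l' (lst V s)); auto. rewrite (minL_same V x0 l' (lst V s)). ring.
    intros v; symmetry; apply Hsm. intros v; symmetry; apply Hsm. }
  destruct (min_pos_fin (subs lr) h) as [d [Hd Hf]].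
  { intros l' Hl'. unfold h. destruct excluded_middle_informative as [[Hnd [s [Hs [Hsr Hsm]]]]|]; [|lra].
    rewrite (HG s l'); auto. specialize (Hgap s Hs Hsr). lra. }
  exists d. split; auto. intros s Hs Hsr.
  destruct (SP_lst V L0 k s Hs) as [Hn [Hi _]].
  destruct (subs_spec lr Hnr (lst V s)) as [l' [Hin [Hn' Hsm]]].
  { intros v Hv. apply Hir, Hsr, Hi; auto. }
  specialize (Hf l' Hin). unfold h in Hf. destruct excluded_middle_informative as [_|Hno].
  rewrite (HG s l') in Hf; auto. exfalso; apply Hno; split; auto; exists s; auto.
Qed.

Notation FmL := (Fm V L L0 Hlink).
Notation ydirL := (ydir V L L0 Hlink).
Notation wdirL := (wdir V L L0 Hlink).
Notation ccL := (cc V L L0 Hlink).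
Notation y0L := (y0 V L L0 Hlink).
Notation HmL := (Hm V L L0 Hlink k).

Lemma u01 : 0 <= 0 <= 1. Proof. lra. Qed.
Lemma ydir_realC s x : SPk s -> in_real L x -> 0 < mn V s x -> 0 < sv V s x ->
  in_real (link L s) (ydirL s x) /\ (forall v, ydirL s x v <> 0 -> x v <> 0 /\ ~ s v).
Proof. intros. apply (ydir_real V L L0 HL Hlink k s H x H0 H1 0 u01 H2). Qed.
Lemma sv_pos_outC s x : SPk s -> in_real L x -> 0 < sv V s x -> exists v, ~ s v /\ x v <> 0.
Proof. intros. apply (sv_pos_out V L L0 k s H x H0 0 u01 H1). Qed.

Lemma th_in s x u : 0 <= u <= 1 -> 0 <= gapf V s x -> 0 <= th V s x u <= 1.
Proof. intros Hu Hg. unfold th. destruct Rlt_dec; [|lra]. unfold Rmin; destruct Rle_dec; [lra|].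
 split; [|lra]. unfold Rdiv. apply Rmult_le_pos. apply Rmult_le_pos; lra. left; apply Rinv_0_lt_compat; auto. Qed.

Section RCs.
Variable D : (V -> R) -> Prop.
Variable x0 : V -> R.
Variable u0 : R.
Variable s : V -> Prop.

Lemma RC_mass : RC V D x0 u0 (fun q _ => mass V s q).
Proof. exact (RC_sumL V D x0 u0 (fun v q u => q v) (lst V s) (fun v _ => RC_coord V D x0 u0 v)). Qed.
Lemma RC_sv : RC V D x0 u0 (fun q _ => sv V s q).
Proof. exact (RC_minus V D x0 u0 _ _ (RC_const V D x0 u0 1) RC_mass). Qed.
Lemma RC_mn : RC V D x0 u0 (fun q _ => mn V s q).
Proof. exact (RC_minL V D x0 u0 (fun v q u => q v) (lst V s) (fun v _ => RC_coord V D x0 u0 v)). Qed.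
Lemma RC_gapf : RC V D x0 u0 (fun q _ => gapf V s q).
Proof. unfold gapf. apply RC_max. apply RC_const. apply RC_minus; [|apply RC_sv].
 exact (RC_div V D x0 u0 _ _ RC_mn (RC_const V D x0 u0 2) ltac:(cbv beta; lra)). Qed.
Lemma RC_su : RC V D x0 u0 (fun q u => su V s q u).
Proof. unfold su. apply RC_plus. apply RC_sv.
 exact (RC_div V D x0 u0 _ _ (RC_mult V D x0 u0 _ _ (RC_u V D x0 u0) RC_gapf) (RC_const V D x0 u0 2) ltac:(cbv beta; lra)). Qed.
Lemma RC_acoef : sv V s x0 <> 1 -> RC V D x0 u0 (fun q u => acoef V s q u).
Proof. intros H. unfold acoef. apply RC_div. apply RC_minus. apply RC_const. apply RC_su.
 apply RC_minus. apply RC_const. apply RC_sv. simpl. lra. Qed.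
Lemma RC_aF v : sv V s x0 <> 1 -> RC V D x0 u0 (fun q u => aF V s q u v).
Proof. intros H. unfold aF. apply RC_mult. apply RC_acoef; auto. apply RC_coord. Qed.
Lemma RC_T : sv V s x0 <> 0 -> RC V D x0 u0 (fun q u => Rmin 1 (u * gapf V s q / sv V s q)).
Proof. intros H. apply RC_min. apply RC_const. apply RC_div. apply RC_mult. apply RC_u. apply RC_gapf. apply RC_sv. auto. Qed.
Lemma RC_Y v : sv V s x0 <> 0 -> RC V D x0 u0 (fun q u => if sdec V s v then 0 else q v / sv V s q).
Proof. intros H. destruct (sdec V s v). apply RC_const. apply RC_div. apply RC_coord. apply RC_sv. auto. Qed.
End RCs.

Definition Dom (rho : V -> Prop) (q : V -> R) := in_real L q /\ subset (supp q) rho.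

Lemma lk_face s rho x0 : SPk s -> L rho -> subset (supp x0) rho -> in_real L x0 -> 0 < mn V s x0 ->
  (exists v, rho v /\ ~ s v) -> link L s (fun v => rho v /\ ~ s v).
Proof. intros Hs Hr Hsub Hx Hm Hne. split; [|split].
 - apply (L_face V L HL) with rho; auto. intros v [Hv _]; auto.
 - intros v [_ Hv]; auto.
 - exists rho. split; auto. split. intros v [Hv _]; auto. intros v Hv. apply Hsub. apply (mn_pos_in V L0 k s Hs x0 v Hm Hv). Qed.

Lemma pbox_from s a0 b0 eta a b : (forall v, In v (lst V s) -> Rabs (a v - a0 v) < eta) -> Rabs (b - b0) < eta -> pbox V (lst V s) a0 b0 eta a b.
Proof. intros H1 H2. split. intros v Hv; left; auto. left; auto. Qed.

Ltac minle := match goal with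
 | |- ?a <= ?a => apply Rle_refl
 | |- Rmin ?a ?b <= ?c => (apply Rle_trans with a; [apply Rmin_l | minle]) || (apply Rle_trans with b; [apply Rmin_r | minle])
 end.
Ltac minpos := repeat apply Rmin_glb_lt; auto.

Lemma ydir_pos_eq s q v : 0 < sv V s q -> ydirL s q v = (if sdec V s v then 0 else q v / sv V s q).
Proof. intros H. unfold ydir. destruct Rlt_dec; [auto|lra]. Qed.
Lemma th_pos_eq s q u : 0 < sv V s q -> th V s q u = Rmin 1 (u * gapf V s q / sv V s q).
Proof. intros H. unfold th. destruct Rlt_dec; [auto|lra]. Qed.

Lemma Fm_cont_A1 s x0 u0 rho Om :
  SPk s -> in_real L x0 -> 0 < mn V s x0 -> L rho -> subset (supp x0) rho -> 0 <= u0 <= 1 -> 0 < sv V s x0 ->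
  ropen V L Om -> Om (FmL s x0 u0) ->
  exists e, 0 < e /\ forall q u, Dom rho q -> close V x0 q e -> 0 <= u <= 1 -> Rabs (u - u0) < e -> Om (FmL s q u).
Proof.
  intros Hs Hx0 Hm0 Hr Hsub Hu0 Hsv0 HOm HOm0.
  assert (lsP := SP_ls V L0 k s Hs).
  assert (Hv0 := Fm_valid V L L0 k s Hs x0 Hx0 Hm0 u0 Hu0).
  assert (Hw0 := wdir_real V L L0 HL Hlink k s Hs x0 Hx0 Hm0 u0 Hu0).
  destruct (comb_cont V L HL s (lst V s) lsP (SP_L V L L0 HL0 k s Hs) Om _ _ _ HOm Hv0 Hw0 HOm0) as [O [HO [Ow0 [eta [Heta Hf]]]]].
  destruct (cc_props V L L0 Hlink s (proj1 Hs)) as [Hy0r [Hcr [Hc0 [Hc1 HCC]]]].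
  destruct (ydir_realC s x0 Hs Hx0 Hm0 Hsv0) as [Hyr Hys].
  assert (Hg0 := proj1 (gapf_bounds V L L0 k s Hs x0 Hx0 Hm0)).
  assert (Hth0 := th_in s x0 u0 Hu0 Hg0).
  destruct (HCC _ _ Hyr Hth0 O HO Ow0) as [N [HN [Ny [d [Hd HfN]]]]].
  destruct (sv_pos_outC s x0 Hs Hx0 Hsv0) as [v1 [Hv1 Hxv1]].
  set (F := fun v => rho v /\ ~ s v).
  assert (HF : link L s F) by (apply lk_face with x0; auto; exists v1; split; auto; apply Hsub; auto).
  assert (HyF : subset (supp (ydirL s x0)) F) by (intros v Hv; destruct (Hys v Hv); split; auto; apply Hsub; auto).
  destruct HN as [_ HNo]. destruct (HNo F HF _ Ny HyF) as [eN [HeN HfN2]].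
  destruct (simplex_list rho Hr) as [lr [Hnr Hir]].
  set (D := Dom rho).
  destruct (RC_near V D x0 u0 _ 0 (RC_sv D x0 u0 s) Hsv0) as [e1 [He1 H1]].
  destruct (RC_near V D x0 u0 _ 0 (RC_mn D x0 u0 s) Hm0) as [e2 [He2 H2]].
  destruct (RC_list V D x0 u0 (fun v q u => if sdec V s v then 0 else q v / sv V s q) lr
     (fun v _ => RC_Y D x0 u0 s v ltac:(lra)) eN HeN) as [e3 [He3 H3]].
  destruct (RC_T D x0 u0 s ltac:(lra) d Hd) as [e4 [He4 H4]].
  assert (Hsv1 : sv V s x0 <> 1) by (pose proof (mn_pos_sv_lt1 V L L0 k s Hs x0 Hx0 Hm0); lra).
  destruct (RC_list V D x0 u0 (fun v q u => aF V s q u v) (lst V s) (fun v _ => RC_aF D x0 u0 s v Hsv1) eta Heta) as [e5 [He5 H5]].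
  destruct (RC_su D x0 u0 s eta Heta) as [e6 [He6 H6]].
  set (e := Rmin (Rmin (Rmin e1 e2) (Rmin e3 e4)) (Rmin e5 e6)).
  exists e. split. unfold e; minpos.
  intros q u Hq Hc Hu Hdu.
  assert (C : forall ei, e <= ei -> close V x0 q ei /\ Rabs (u - u0) < ei).
  { intros ei Hei. split. eapply close_mono; [|exact Hc]; auto. lra. }
  destruct (C e1 ltac:(unfold e; minle)) as [C1 U1]. destruct (C e2 ltac:(unfold e; minle)) as [C2 U2].
  destruct (C e3 ltac:(unfold e; minle)) as [C3 U3]. destruct (C e4 ltac:(unfold e; minle)) as [C4 U4].
  destruct (C e5 ltac:(unfold e; minle)) as [C5 U5]. destruct (C e6 ltac:(unfold e; minle)) as [C6 U6].
  assert (Hsvq : 0 < sv V s q) by (apply (H1 q u); auto).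
  assert (Hmq : 0 < mn V s q) by (apply (H2 q u); auto).
  destruct Hq as [Hqr Hqs].
  destruct (ydir_realC s q Hs Hqr Hmq Hsvq) as [Hyq Hysq].
  assert (Hcl : close V (ydirL s x0) (ydirL s q) eN).
  { intros v. destruct (classic (In v lr)) as [Hin|Hnin].
    - specialize (H3 q u (conj Hqr Hqs) C3 U3 v Hin). simpl in H3. rewrite (ydir_pos_eq s q v Hsvq), (ydir_pos_eq s x0 v Hsv0).
      rewrite Rabs_minus_sym; auto.
    - assert (Hq0 : q v = 0). { apply NNPP; intro Hnz. apply Hnin, Hir, Hqs; auto. }
      assert (Hx00 : x0 v = 0). { apply NNPP; intro Hnz. apply Hnin, Hir, Hsub; auto. }
      rewrite (ydir_pos_eq s q v Hsvq), (ydir_pos_eq s x0 v Hsv0). destruct (sdec V s v).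
      rewrite Rminus_diag, Rabs_R0; auto. rewrite Hq0, Hx00. unfold Rdiv. rewrite !Rmult_0_l, Rminus_diag, Rabs_R0; auto. }
  assert (Nyq : N (ydirL s q)).
  { apply HfN2; auto. intros v Hv. destruct (Hysq v Hv). split; auto. }
  assert (Hgq := proj1 (gapf_bounds V L L0 k s Hs q Hqr Hmq)).
  assert (Hthq := th_in s q u Hu Hgq).
  assert (Hdth : Rabs (th V s q u - th V s x0 u0) < d).
  { rewrite (th_pos_eq s q u Hsvq), (th_pos_eq s x0 u0 Hsv0). apply (H4 q u); auto. split; auto. }
  assert (Ow : O (wdirL s q u)) by (apply HfN; auto).
  apply (Hf (wdirL s q u) (aF V s q u) (su V s q u) Ow).
  apply (Fm_valid V L L0 k s Hs q Hqr Hmq u Hu).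
  apply pbox_from. intros v Hv. apply (H5 q u (conj Hqr Hqs) C5 U5 v Hv). apply (H6 q u (conj Hqr Hqs) C6 U6).
Qed.

Lemma wdir_y0 s q u : SPk s -> in_real L q -> 0 < mn V s q -> 0 <= u <= 1 ->
  (sv V s q = 0 \/ (0 < sv V s q /\ sv V s q <= u * gapf V s q)) -> wdirL s q u = y0L s.
Proof. intros Hs Hq Hm Hu Hc. destruct (cc_props V L L0 Hlink s (proj1 Hs)) as [Hy0r [Hcr [Hc0 [Hc1 HCC]]]].
 unfold wdir. destruct Hc as [H0|[Hp Hle]].
 - unfold th, ydir. destruct Rlt_dec; [lra|]. apply Hc1; auto.
 - rewrite (th_pos_eq s q u Hp). replace (Rmin 1 (u * gapf V s q / sv V s q)) with 1.
   apply Hc1. apply (ydir_realC s q Hs Hq Hm Hp).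
   unfold Rmin. destruct Rle_dec as [|Hn]; auto. exfalso. apply Hn.
   apply Rmult_le_reg_r with (sv V s q); auto. unfold Rdiv. rewrite Rmult_assoc, Rinv_l by lra. lra. Qed.

Lemma Fm_cont_A2 s x0 u0 rho Om :
  SPk s -> in_real L x0 -> 0 < mn V s x0 -> L rho -> subset (supp x0) rho -> 0 < u0 <= 1 -> sv V s x0 = 0 ->
  ropen V L Om -> Om (FmL s x0 u0) ->
  exists e, 0 < e /\ forall q u, Dom rho q -> close V x0 q e -> 0 <= u <= 1 -> Rabs (u - u0) < e -> Om (FmL s q u).
Proof.
  intros Hs Hx0 Hm0 Hr Hsub Hu0 Hsv0 HOm HOm0.
  assert (Hu0' : 0 <= u0 <= 1) by lra.
  assert (lsP := SP_ls V L0 k s Hs).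
  assert (Hv0 := Fm_valid V L L0 k s Hs x0 Hx0 Hm0 u0 Hu0').
  destruct (cc_props V L L0 Hlink s (proj1 Hs)) as [Hy0r [Hcr [Hc0 [Hc1 HCC]]]].
  assert (Hw0 : wdirL s x0 u0 = y0L s) by (apply wdir_y0; auto).
  unfold Fm in HOm0. rewrite Hw0 in HOm0.
  destruct (comb_cont V L HL s (lst V s) lsP (SP_L V L L0 HL0 k s Hs) Om _ _ _ HOm Hv0 Hy0r HOm0) as [O [HO [Ow0 [eta [Heta Hf]]]]].
  set (M := mn V s x0). set (c := Rmin (M / 8) (u0 * M / 32)).
  assert (Hc : 0 < c) by (unfold c, M; apply Rmin_glb_lt; [lra|]; apply Rdiv_lt_0_compat; [apply Rmult_lt_0_compat|]; lra).
  set (D := Dom rho).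
  destruct (RC_near' V D x0 u0 _ c (RC_sv D x0 u0 s) ltac:(cbv beta; lra)) as [e1 [He1 H1]].
  destruct (RC_near V D x0 u0 _ (M / 2) (RC_mn D x0 u0 s) ltac:(cbv beta; unfold M; lra)) as [e2 [He2 H2]].
  assert (Hsv1 : sv V s x0 <> 1) by lra.
  destruct (RC_list V D x0 u0 (fun v q u => aF V s q u v) (lst V s) (fun v _ => RC_aF D x0 u0 s v Hsv1) eta Heta) as [e5 [He5 H5]].
  destruct (RC_su D x0 u0 s eta Heta) as [e6 [He6 H6]].
  set (e := Rmin (Rmin (Rmin e1 e2) (u0 / 2)) (Rmin e5 e6)).
  exists e. split. unfold e; minpos; lra.
  intros q u Hq Hcl Hu Hdu.
  assert (C : forall ei, e <= ei -> close V x0 q ei /\ Rabs (u - u0) < ei).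
  { intros ei Hei. split. eapply close_mono; [|exact Hcl]; auto. lra. }
  destruct (C e1 ltac:(unfold e; minle)) as [C1 U1]. destruct (C e2 ltac:(unfold e; minle)) as [C2 U2].
  destruct (C (u0/2) ltac:(unfold e; minle)) as [_ U3].
  destruct (C e5 ltac:(unfold e; minle)) as [C5 U5]. destruct (C e6 ltac:(unfold e; minle)) as [C6 U6].
  assert (Hsvq : sv V s q < c) by (apply (H1 q u); auto).
  assert (Hmq : M / 2 < mn V s q) by (apply (H2 q u); auto).
  destruct Hq as [Hqr Hqs].
  assert (Hmq' : 0 < mn V s q) by (unfold M in *; lra).
  assert (Hwq : wdirL s q u = y0L s).
  { apply wdir_y0; auto. pose proof (sv_bounds V L L0 k s Hs q Hqr) as [Hb _].
    destruct (Rle_lt_or_eq_dec _ _ Hb) as [Hp|Hz]; [right|left; auto].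
    split; auto. assert (Hgq : mn V s q / 2 - sv V s q <= gapf V s q) by (unfold gapf; apply Rmax_r).
    apply Rabs_lt_inv in U3. pose proof (Rmin_l (M / 8) (u0 * M / 32)). pose proof (Rmin_r (M / 8) (u0 * M / 32)).
    fold c in H, H0. assert (M / 8 <= gapf V s q) by lra.
    assert (u0 / 2 * (M / 8) <= u * gapf V s q) by (apply Rmult_le_compat; lra).
    lra. }
  unfold Fm. rewrite Hwq. apply (Hf (y0L s) (aF V s q u) (su V s q u) Ow0).
  apply (Fm_valid V L L0 k s Hs q Hqr Hmq' u Hu).
  apply pbox_from. intros v Hv. apply (H5 q u (conj Hqr Hqs) C5 U5 v Hv). apply (H6 q u (conj Hqr Hqs) C6 U6).
Qed.

Lemma Fm_cont_A3 s x0 rho Om :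
  SPk s -> in_real L x0 -> 0 < mn V s x0 -> L rho -> subset (supp x0) rho -> sv V s x0 = 0 ->
  ropen V L Om -> Om (FmL s x0 0) ->
  exists e, 0 < e /\ forall q u, Dom rho q -> close V x0 q e -> 0 <= u <= 1 -> Rabs (u - 0) < e -> Om (FmL s q u).
Proof.
  intros Hs Hx0 Hm0 Hr Hsub Hsv0 HOm HOm0.
  assert (lsP := SP_ls V L0 k s Hs).
  assert (Hv0 := Fm_valid V L L0 k s Hs x0 Hx0 Hm0 0 u01).
  destruct (cc_props V L L0 Hlink s (proj1 Hs)) as [Hy0r [Hcr [Hc0 [Hc1 HCC]]]].
  set (a0 := aF V s x0 0). set (b0 := su V s x0 0).
  assert (Hb0 : b0 = 0) by (unfold b0, su; rewrite Hsv0; lra).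
  assert (Hcomb : forall w, comb V s a0 b0 w = x0).
  { intros w. transitivity (FmL s x0 0); [|apply (Fm_id V L L0 HL Hlink k s Hs x0 Hx0 Hm0 0 u01 (or_introl eq_refl))].
    unfold Fm. fold a0 b0. apply functional_extensionality; intro v. unfold comb. destruct (sdec V s v); auto.
    rewrite Hb0; ring. }
  assert (HOmx0 : Om x0) by (rewrite <- (Fm_id V L L0 HL Hlink k s Hs x0 Hx0 Hm0 0 u01 (or_introl eq_refl)); auto).
  destruct (comb_cont V L HL s (lst V s) lsP (SP_L V L L0 HL0 k s Hs) Om a0 b0 (y0L s) HOm Hv0 Hy0r
     ltac:(rewrite Hcomb; auto)) as [O1 [HO1 [Ow1 [eta1 [Heta1 Hf1]]]]].
  set (F := fun v => rho v /\ ~ s v).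
  destruct (simplex_list rho Hr) as [lr [Hnr Hir]].
  destruct (filter_exists V (fun v => ~ s v) lr) as [lF [HnF HiF]].
  assert (HiF' : forall v, In v lF <-> F v).
  { intros v. rewrite HiF. unfold F. rewrite <- Hir. tauto. }
  set (lstF := None :: map Some lF).
  assert (Hin : forall v, In (Some v) lstF <-> In v lF).
  { intros v. unfold lstF. simpl. rewrite in_map_iff. split. intros [H|[x [H1 H2]]]; [discriminate|]. injection H1; intros ->; auto.
    intros H; right; exists v; auto. }
  set (yP := fun (P : option V -> R) v => P (Some v)).
  set (Fu := fun eta (P : option V -> R) => in_real (link L s) (yP P) -> subset (supp (yP P)) F ->
      forall a b, valid V (lst V s) a b -> pbox V (lst V s) a0 b0 eta a b -> Om (comb V s a b (ccL s (yP P) (P None)))).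
  assert (HlkF : (exists v, F v) -> link L s F).
  { intros [v Hv]. apply lk_face with x0; auto. exists v; auto. }
  destruct (unifN (option V) lstF (fun _ => 0) (fun _ => 1) (fun _ => 0) Fu) as [eta2 [Heta2 Hf2]].
  - intros e e' P He' HFu Hy HyF a b Hv [Hpa Hpb]. apply HFu; auto. split; [intros v Hv'; specialize (Hpa v Hv')|]; lra.
  - intros P [HP1 HP2].
    assert (HyF : subset (supp (yP P)) F).
    { intros v Hv. apply HiF'. apply Hin. apply NNPP; intro Hn. apply Hv. unfold yP. rewrite HP2; auto. }
    destruct (classic (in_real (link L s) (yP P))) as [Hyr|Hyn].
    + destruct (inr_supp_ne V (link L s) _ Hyr) as [v1 Hv1].
      assert (HF : link L s F) by (apply HlkF; exists v1; apply HyF; auto).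
      assert (Hth : 0 <= P None <= 1) by (apply HP1; left; auto).
      assert (Hwr := Hcr _ (P None) Hyr).
      destruct (comb_cont V L HL s (lst V s) lsP (SP_L V L L0 HL0 k s Hs) Om a0 b0 _ HOm Hv0 Hwr
        ltac:(rewrite Hcomb; auto)) as [Ow [HOw [Oww [etaw [Hetaw Hfw]]]]].
      destruct (HCC _ _ Hyr Hth Ow HOw Oww) as [N [HN [Ny [d [Hd HfN]]]]].
      destruct HN as [_ HNo]. destruct (HNo F HF _ Ny HyF) as [eN [HeN HfN2]].
      exists (Rmin etaw (Rmin d eN)). split. minpos.
      intros P' [HP1' HP2'] Hd' Hy' HyF' a b Hv [Hpa Hpb].
      assert (Hcl : close V (yP P) (yP P') eN).
      { intros v. destruct (classic (In v lF)) as [Hv'|Hv'].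
        - specialize (Hd' (Some v) (proj2 (Hin v) Hv')). unfold yP. rewrite Rabs_minus_sym.
          eapply Rlt_le_trans; [exact Hd'|]. minle.
        - assert (E1 : yP P v = 0) by (apply NNPP; intro Hz; apply Hv', HiF', HyF; auto).
          assert (E2 : yP P' v = 0) by (apply NNPP; intro Hz; apply Hv', HiF', HyF'; auto).
          rewrite E1, E2, Rminus_diag, Rabs_R0; auto. }
      assert (Ow' : Ow (ccL s (yP P') (P' None))).
      { apply HfN. apply HfN2; auto. apply HP1'; left; auto.
        eapply Rlt_le_trans; [exact (Hd' None (or_introl eq_refl))|]. minle. }
      apply Hfw; auto. split. intros v Hv'. specialize (Hpa v Hv').
      assert (Rmin etaw (Rmin d eN) <= etaw) by minle. lra.
      assert (Rmin etaw (Rmin d eN) <= etaw) by minle. lra.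
    +
      assert (Hsum : sumL V (yP P) lF <> 1).
      { intros Hs1. apply Hyn. split; [|split].
        - intros v. destruct (classic (In (Some v) lstF)) as [Hv|Hv]. apply HP1; auto. unfold yP; rewrite HP2; auto; lra.
        - assert (Hne : exists v, supp (yP P) v).
          { apply NNPP; intro Hn. assert (sumL V (yP P) lF = 0). { apply sumL_zero. intros v _. apply NNPP; intro Hz; apply Hn; exists v; auto. } lra. }
          destruct Hne as [v1 Hv1]. destruct (HlkF (ex_intro _ v1 (HyF v1 Hv1))) as [HLF [HdF [rho' [Hr' [HFr HsF]]]]].
          split; [|split].
          + apply (L_face V L HL) with F; auto. exists v1; auto.
          + intros v Hv. apply HyF in Hv. apply Hv.
          + exists rho'. split; auto. split; auto. intros v Hv; apply HFr, HyF; auto.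
        - exists lF. split; auto. split; auto. intros v Hv. apply HiF', HyF; auto. }
      set (g := Rabs (sumL V (yP P) lF - 1)).
      assert (Hg : 0 < g) by (apply Rabs_pos_lt; lra).
      set (n := INR (length lF)). assert (Hn : 0 <= n) by apply pos_INR.
      exists (g / (2 * (n + 1))). split. apply Rdiv_lt_0_compat; lra.
      intros P' [HP1' HP2'] Hd Hy' HyF'. exfalso.
      assert (Hs' : sumL V (yP P') lF = 1).
      { apply (inr_sum_any V (link L s)); auto. intros v Hv. apply HiF', HyF'; auto. }
      assert (H1 : Rabs (sumL V (yP P') lF - sumL V (yP P) lF) <= n * (g / (2 * (n + 1)))).
      { apply sumL_abs_le. intros v Hv. left. apply Hd, Hin; auto. }
      apply Rabs_le_inv in H1.
      assert (n * (g / (2 * (n + 1))) < g) by (apply Rmult_lt_reg_r with (2 * (n + 1)); [lra|]; field_simplify; nra).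
      unfold g in *. destruct (Rcase_abs (sumL V (yP P) lF - 1)) as [Hlt|Hge].
      rewrite Rabs_left in * by auto. lra. rewrite Rabs_right in * by auto. lra.
  -
    set (eta := Rmin eta1 eta2).
    assert (Heta : 0 < eta) by (unfold eta; minpos).
    set (M := mn V s x0).
    set (D := Dom rho).
    assert (Hsv1 : sv V s x0 <> 1) by lra.
    destruct (RC_near V D x0 0 _ (M / 2) (RC_mn D x0 0 s) ltac:(cbv beta; unfold M; lra)) as [e2 [He2 H2]].
    destruct (RC_list V D x0 0 (fun v q u => aF V s q u v) (lst V s) (fun v _ => RC_aF D x0 0 s v Hsv1) eta Heta) as [e5 [He5 H5]].
    destruct (RC_su D x0 0 s eta Heta) as [e6 [He6 H6]].
    exists (Rmin e2 (Rmin e5 e6)). split. minpos.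
    intros q u Hq Hcl Hu Hdu.
    assert (C : forall ei, Rmin e2 (Rmin e5 e6) <= ei -> close V x0 q ei /\ Rabs (u - 0) < ei).
    { intros ei Hei. split. eapply close_mono; [|exact Hcl]; auto. lra. }
    destruct (C e2 ltac:(minle)) as [C2 U2]. destruct (C e5 ltac:(minle)) as [C5 U5]. destruct (C e6 ltac:(minle)) as [C6 U6].
    assert (Hmq : M / 2 < mn V s q) by (apply (H2 q u); auto).
    destruct Hq as [Hqr Hqs].
    assert (Hmq' : 0 < mn V s q) by (unfold M in *; lra).
    assert (Hvq := Fm_valid V L L0 k s Hs q Hqr Hmq' u Hu).
    assert (Hpb : pbox V (lst V s) a0 b0 eta (aF V s q u) (su V s q u)).
    { apply pbox_from. intros v Hv. apply (H5 q u (conj Hqr Hqs) C5 U5 v Hv). apply (H6 q u (conj Hqr Hqs) C6 U6). }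
    assert (Hpb1 : pbox V (lst V s) a0 b0 eta1 (aF V s q u) (su V s q u)).
    { destruct Hpb as [Hpa Hpb]. assert (eta <= eta1) by (unfold eta; minle). split; [intros v Hv; specialize (Hpa v Hv)|]; lra. }
    assert (Hpb2 : pbox V (lst V s) a0 b0 eta2 (aF V s q u) (su V s q u)).
    { destruct Hpb as [Hpa Hpb]. assert (eta <= eta2) by (unfold eta; minle). split; [intros v Hv; specialize (Hpa v Hv)|]; lra. }
    pose proof (sv_bounds V L L0 k s Hs q Hqr) as [Hb _].
    destruct (Rle_lt_or_eq_dec _ _ Hb) as [Hp|Hz].
    + destruct (ydir_realC s q Hs Hqr Hmq' Hp) as [Hyq Hysq].
      set (P := fun o : option V => match o with Some v => ydirL s q v | None => th V s q u end).
      apply (Hf2 P).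
      * split.
        -- intros o Ho. destruct o as [v|]. simpl. split. apply inr_nonneg with (link L s); auto. apply inr_le1 with (link L s); auto.
           simpl. apply th_in; auto. apply (gapf_bounds V L L0 k s Hs q Hqr Hmq').
        -- intros o Ho. destruct o as [v|]. simpl. apply NNPP; intro Hz. apply Ho, Hin, HiF'.
           destruct (Hysq v Hz). split; auto. exfalso; apply Ho; left; auto.
      * exact Hyq.
      * intros v Hv. destruct (Hysq v Hv). split; auto.
      * exact Hvq.
      * exact Hpb2.
    + unfold Fm. rewrite (wdir_y0 s q u Hs Hqr Hmq' Hu (or_introl (eq_sym Hz))). apply Hf1; auto.
Qed.

Lemma Fm_cont s x0 u0 rho Om :
  SPk s -> in_real L x0 -> 0 < mn V s x0 -> L rho -> subset (supp x0) rho -> 0 <= u0 <= 1 ->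
  ropen V L Om -> Om (FmL s x0 u0) ->
  exists e, 0 < e /\ forall q u, Dom rho q -> close V x0 q e -> 0 <= u <= 1 -> Rabs (u - u0) < e -> Om (FmL s q u).
Proof. intros Hs Hx0 Hm0 Hr Hsub Hu0 HOm HOm0.
 pose proof (sv_bounds V L L0 k s Hs x0 Hx0) as [Hb _].
 destruct (Rle_lt_or_eq_dec _ _ Hb) as [Hp|Hz].
 - apply Fm_cont_A1; auto.
 - destruct (Rle_lt_or_eq_dec _ _ (proj1 Hu0)) as [Hu|Hu].
   + apply Fm_cont_A2; auto. lra.
   + subst u0. apply Fm_cont_A3; auto. Qed.

Lemma mass_close s x q e : SPk s -> close V x q e -> Rabs (mass V s x - mass V s q) <= INR (S k) * e.
Proof. intros Hs Hc. destruct (SP_lst V L0 k s Hs) as [_ [_ Hl]]. rewrite <- Hl. apply sumL_abs_le. intros v _; left; apply Hc. Qed.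
Lemma mn_close s x q e : SPk s -> close V x q e -> Rabs (mn V s x - mn V s q) <= e.
Proof. intros Hs Hc. apply minL_close. apply (lst_ne V L0 k s Hs). intros v _; left; apply Hc. Qed.

Lemma Hm_eq_Fm s x0 q u : SPk s -> in_real L x0 -> sv V s x0 <= mn V s x0 / 2 -> 0 < mn V s x0 ->
  in_real L q -> close V x0 q (mn V s x0 / 4) -> 0 <= u <= 1 -> HmL q u = FmL s q u.
Proof. intros Hs Hx0 Hc Hm Hq Hcl Hu.
 destruct (classic (exists s', InR V L0 k s' q)) as [[s' Hs']|Hn].
 - assert (s' = s). { destruct Hs' as [Hs'1 Hs'2]. apply (slack V L L0 k s s' x0 q (mn V s x0 / 4)); auto. lra. }
   subst s'. apply Hm_InR; auto.
 - rewrite Hm_none; auto. symmetry.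
   assert (Hmq : 0 < mn V s q). { pose proof (mn_close s x0 q _ Hs Hcl). apply Rabs_le_inv in H. lra. }
   apply (Fm_id V L L0 HL Hlink k s Hs q Hq Hmq u Hu). right.
   unfold gapf. assert (mn V s q / 2 - sv V s q <= 0).
   { apply Rnot_lt_le. intro Hlt. apply Hn. exists s. split; auto. lra. }
   unfold Rmax; destruct Rle_dec; lra. Qed.

Lemma Hm_cont : SCont V L (W V L L0 k) HmL.
Proof.
  intros rho Hr x0 u0 Hx0W Hsub Hu0 Om HOm HOmx.
  assert (Hx0 : in_real L x0) by apply Hx0W.
  destruct (classic (exists s, CR V L0 k s x0)) as [[s HCR]|HnCR].
  - assert (HM := CR_mn_pos V L L0 HL0 k s x0 Hx0W HCR). destruct HCR as [Hs Hc].
    rewrite (Hm_eq_Fm s x0 x0 u0 Hs Hx0 Hc HM Hx0 (close_refl V x0 (mn V s x0 / 4) ltac:(lra)) Hu0) in HOmx.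
    destruct (Fm_cont s x0 u0 rho Om Hs Hx0 HM Hr Hsub Hu0 HOm HOmx) as [e [He Hf]].
    exists (Rmin e (mn V s x0 / 4)). split. minpos; lra.
    intros q u HqW Hqs Hcl Hu Hdu. assert (Hq : in_real L q) by apply HqW.
    rewrite (Hm_eq_Fm s x0 q u Hs Hx0 Hc HM Hq); auto.
    apply Hf; auto. split; auto. eapply close_mono; [|exact Hcl]; minle.
    eapply Rlt_le_trans; [exact Hdu|]; minle.
    eapply close_mono; [|exact Hcl]; minle.
  - assert (HnI : forall q, ~ (exists s, InR V L0 k s q) \/ True) by (intros; right; auto).
    assert (Hnx : ~ (exists s, InR V L0 k s x0)).
    { intros [s [Hs Hc]]. apply HnCR. exists s. split; auto. lra. }
    rewrite (Hm_none V L L0 Hlink k x0 u0 Hnx) in HOmx.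
    destruct (gap_unif x0 rho Hx0 Hr) as [d [Hd Hgd]].
    { intros s Hs _. apply Rnot_le_lt. intro Hle. apply HnCR. exists s. split; auto. }
    destruct HOm as [HOmr HOmo]. destruct (HOmo rho Hr x0 HOmx Hsub) as [eO [HeO HfO]].
    set (e := Rmin eO (d / (INR (S k) + 2))).
    assert (Hk : 0 <= INR (S k)) by apply pos_INR.
    exists e. split. unfold e; minpos. apply Rdiv_lt_0_compat; lra.
    intros q u HqW Hqs Hcl Hu Hdu. assert (Hq : in_real L q) by apply HqW.
    assert (Hnq : ~ (exists s, InR V L0 k s q)).
    { intros [s [Hs Hc]]. assert (Hmq : 0 < mn V s q) by (pose proof (sv_bounds V L L0 k s Hs q Hq); lra).
      assert (Hsr : subset s rho). { intros v Hv. apply Hqs. apply (mn_pos_in V L0 k s Hs q v Hmq Hv). }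
      specialize (Hgd s Hs Hsr).
      assert (Hcl' : close V x0 q e) by (eapply close_mono; [|exact Hcl]; lra).
      pose proof (mass_close s x0 q e Hs Hcl'). pose proof (mn_close s x0 q e Hs Hcl').
      apply Rabs_le_inv in H. apply Rabs_le_inv in H0. unfold sv in *.
      assert (He : e <= d / (INR (S k) + 2)) by (unfold e; minle).
      assert (INR (S k) * e + e / 2 < d).
      { assert ((INR (S k) + 2) * e <= d).
        { apply Rmult_le_reg_r with (/ (INR (S k) + 2)). apply Rinv_0_lt_compat; lra.
          rewrite Rmult_comm, <- Rmult_assoc, Rinv_l, Rmult_1_l by lra. exact He. }
        assert (0 < e) by (unfold e; minpos; apply Rdiv_lt_0_compat; lra). nra. }
      lra. }
    rewrite (Hm_none V L L0 Hlink k q u Hnq). apply HfO; auto. eapply close_mono; [|exact Hcl]; unfold e; minle.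
Qed.

Lemma step_E : E V L (W V L L0 (S k)) (W V L L0 k).
Proof.
  split. intros x; apply W_mono.
  exists (fun x => HmL x 1). split. intros x Hx. apply Hm_1; auto.
  split. apply SCont_at. lra. apply Hm_cont.
  split.
  - exists HmL. split; [|split; [|split]].
    + apply Hm_cont.
    + intros x t Hx Ht. apply Hm_Wk; auto.
    + intros x Hx. apply Hm_0; auto. apply Hx.
    + auto.
  - exists (fun x t => HmL x (1 - t)). split; [|split; [|split]].
    + apply SCont_restrict with (W V L L0 k). apply W_mono. apply SCont_reverse. apply Hm_cont.
    + intros x t Hx Ht. apply Hm_WSk; auto. lra.
    + intros x Hx. rewrite Rminus_0_r. auto.
    + intros x Hx. rewrite Rminus_diag. apply Hm_0; auto. apply Hx.
Qed.

End Cont.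

Theorem proposition3p2 (V : Type) (L L0 : (V -> Prop) -> Prop)
  (HL : is_complex L) (HL0 : is_subcomplex L0 L) (Hfd : finite_dim L)
  (Hlink : forall sigma, L0 sigma -> contractible (weak_top (link L sigma))) :
  homotopy_equivalence (subspace_top (weak_top L) (not_in_sub L L0))
    (weak_top L) (fun p => proj1_sig p).
Proof.
  exact (assemble V L L0 HL0 (fun k => step_E V L L0 HL HL0 Hlink k) Hfd).
Qed.
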